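(* Assume the standing assumptions (P1)–(P6) described in the context. Let $(f_0,t_0)\in\mathrm{Dom}\,\mathcal P$ with $f_0\in F_+$, let $T\in(t_0,+\infty]$, and let $\varphi_{ap}\in C([t_0,T),F_+)\cap C^1([t_0,T),F_-)$ with graph contained in $\mathrm{Dom}\,\mathcal P$. Put $d(\varphi_{ap}):=\varphi_{ap}(t_0)-f_0$ and $e(\varphi_{ap})(t):=\dot\varphi_{ap}(t)-\mathcal A\varphi_{ap}(t)-\mathcal P(\varphi_{ap}(t),t)$. Then: (i) $\varphi_{ap}\in C([t_0,T),F)$, and its integral error $E(\varphi_{ap})(t):=\varphi_{ap}(t)-e^{(t-t_0)\mathcal A}f_0-\int_{t_0}^te^{(t-s)\mathcal A}\mathcal P(\varphi_{ap}(s),s)\,ds$ satisfies $$E(\varphi_{ap})(t)=e^{(t-t_0)\mathcal A}d(\varphi_{ap})+\int_{t_0}^te^{(t-s)\mathcal A}e(\varphi_{ap})(s)\,ds\qquad(t\in[t_0,T)).$$ (ii) If $\delta\ge0$ with $\|d(\varphi_{ap})\|\le\delta$ and $\epsilon\in C([t_0,T),[0,+\infty))$ with $\|e(\varphi_{ap})(t)\|_-\le\epsilon(t)$ for all $t$, then $\|E(\varphi_{ap})(t)\|\le u(t-t_0)\delta+\int_{t_0}^tu_-(t-s)\epsilon(s)\,ds$ for all $t\in[t_0,T)$.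
   Context: All Banach spaces are over a common field ($\mathbb R$ or $\mathbb C$). For Banach spaces $X,Y$, $X\hookrightarrow Y$ means that $X$ is a dense linear subspace of $Y$ and the inclusion is continuous. Standing assumptions: (P1) $F_+,F,F_-$ are Banach spaces with norms $\|\cdot\|_+,\|\cdot\|,\|\cdot\|_-$ and $F_+\hookrightarrow F\hookrightarrow F_-$; $B(f_0,r):=\{f\in F:\|f-f_0\|<r\}$. (P2) $\mathcal A:F_+\to F_-$ is linear and on $F_+$ the norm $\|\cdot\|_+$ is equivalent to $f\mapsto\|f\|_-+\|\mathcal Af\|_-$. (P3) $\mathcal A$, viewed as a densely defined operator in $F_-$ with domain $F_+$, generates a strongly continuous semigroup $(e^{t\mathcal A})_{t\ge0}$ on $F_-$. (P4) $e^{t\mathcal A}(F)\subset F$ for $t\ge0$, $(f,t)\mapsto e^{t\mathcal A}f$ is continuous from $F\times[0,\infty)$ to $F$, and $u\in C([0,\infty),(0,\infty))$ satisfies $\|e^{t\mathcal A}f\|\le u(t)\|f\|$. (P5) $e^{t\mathcal A}(F_-)\subset F$ for $t>0$, $(f,t)\mapsto e^{t\mathcal A}f$ is continuous from $F_-\times(0,\infty)$ to $F$, and $u_-\in C((0,\infty),(0,\infty))$ satisfies $\|e^{t\mathcal A}f\|\le u_-(t)\|f\|_-$ for $t>0$, $f\in F_-$, with $u_-(t)=O(t^{-(1-\sigma)})$ as $t\to0^+$ for some $\sigma\in(0,1]$. (P6) $\mathcal P:\mathrm{Dom}\,\mathcal P\subset F\times\mathbb R\to F_-$; the domain is semi-open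 (for each $(f_0,t_0)\in\mathrm{Dom}\,\mathcal P$ there are $\delta,r\in(0,+\infty]$ with $B(f_0,r)\times[t_0,t_0+\delta)\subset\mathrm{Dom}\,\mathcal P$), and for every closed bounded $\mathcal C\subset F\times\mathbb R$ with $\mathcal C\subset\mathrm{Dom}\,\mathcal P$ there are $L,M\ge0$ with $\|\mathcal P(f,t)-\mathcal P(f',t')\|_-\le L\|f-f'\|+M|t-t'|$ on $\mathcal C$. The graph of $\varphi$ is $\{(\varphi(t),t)\}$. *)

(* Defs.v *)
From Stdlib Require Import Reals.
From Coquelicot Require Import Coquelicot.
Open Scope R_scope.

Definition dense_incl {X Y : NormedModule R_AbsRing} (i : X -> Y) : Prop :=
  is_linear i /\
  (forall x y, i x = i y -> x = y) /\
  (forall (y : Y) (eps : R), 0 < eps -> exists x : X, norm (minus (i x) y) < eps).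

Definition cont_on_Ico {V : NormedModule R_AbsRing} (g : R -> V) (a : R) (b : Rbar)
  : Prop :=
  forall t, a <= t -> Rbar_lt t b ->
  forall eps, 0 < eps -> exists d, 0 < d /\
    forall s, a <= s -> Rbar_lt s b -> Rabs (s - t) < d ->
      norm (minus (g s) (g t)) < eps.

Definition deriv_on_Ico {V : NormedModule R_AbsRing} (g g' : R -> V) (a : R) (b : Rbar)
  : Prop :=
  forall t, a <= t -> Rbar_lt t b ->
  forall eps, 0 < eps -> exists d, 0 < d /\
    forall s, a <= s -> Rbar_lt s b -> Rabs (s - t) < d ->
      norm (minus (minus (g s) (g t)) (scal (s - t) (g' t))) <= eps * Rabs (s - t).

Definition C1_on_Ico {V : NormedModule R_AbsRing} (g g' : R -> V) (a : R) (b : Rbar)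
  : Prop :=
  cont_on_Ico g a b /\ deriv_on_Ico g g' a b /\ cont_on_Ico g' a b.

Definition C0_semigroup {V : NormedModule R_AbsRing} (S : R -> V -> V) : Prop :=
  (forall t, 0 <= t -> is_linear (S t)) /\
  (forall x, S 0 x = x) /\
  (forall t s x, 0 <= t -> 0 <= s -> S (t + s) x = S t (S s x)) /\
  (forall x eps, 0 < eps -> exists d, 0 < d /\
     forall h, 0 <= h < d -> norm (minus (S h x) x) < eps).

Definition right_deriv0 {V : NormedModule R_AbsRing} (S : R -> V -> V) (x l : V) : Prop :=
  forall eps, 0 < eps -> exists d, 0 < d /\
    forall h, 0 < h < d -> norm (minus (scal (/ h) (minus (S h x) x)) l) < eps.

(* The generator of S is the operator A with domain j(Dom) : exactly the x
   for which the limit exists, and the limit is A. *)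
Definition generates {X V : NormedModule R_AbsRing} (S : R -> V -> V)
  (j : X -> V) (A : X -> V) : Prop :=
  (forall y : X, right_deriv0 S (j y) (A y)) /\
  (forall x l, right_deriv0 S x l -> exists y : X, x = j y).

Definition semi_open {F : NormedModule R_AbsRing} (D : F -> R -> Prop) : Prop :=
  forall f0 t0, D f0 t0 -> exists (delta r : Rbar), Rbar_lt 0 delta /\ Rbar_lt 0 r /\
    forall f t, Rbar_lt (norm (minus f f0)) r -> t0 <= t -> Rbar_lt (t - t0) delta ->
      D f t.

Definition bounded_FR {F : NormedModule R_AbsRing} (C : F * R -> Prop) : Prop :=
  exists M, forall p, C p -> norm (fst p) <= M /\ Rabs (snd p) <= M.

Definition lipschitz_on_closed_bounded {F G : NormedModule R_AbsRing}
  (D : F -> R -> Prop) (P : F -> R -> G) : Prop :=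
  forall C : F * R -> Prop,
    closed C -> bounded_FR C -> (forall p, C p -> D (fst p) (snd p)) ->
    exists L M, 0 <= L /\ 0 <= M /\
      forall p q, C p -> C q ->
        norm (minus (P (fst p) (snd p)) (P (fst q) (snd q)))
          <= L * norm (minus (fst p) (fst q)) + M * Rabs (snd p - snd q).

Definition improper_int_Ico (h : R -> R) (a b I : R) : Prop :=
  a <= b /\
  (forall tau, a <= tau < b -> ex_RInt h a tau) /\
  (a = b -> I = 0) /\
  (a < b -> filterlim (fun tau => RInt h a tau) (at_left b) (locally I)).

(* Main.v *)
Require Import Defs.
From Stdlib Require Import Reals.
From Coquelicot Require Import Coquelicot.
Open Scope R_scope.
From Stdlib Require Import Reals Lra Lia ZArith ClassicalEpsilon Classical.
From Coquelicot Require Import Coquelicot.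
From Stdlib Require Import ssreflect.

Lemma exists_INR_gt (K : R) : exists n : nat, K < INR n.
Proof.
  destruct (archimed (Rabs K)) as [H1 _].
  assert (Hz : (0 <= up (Rabs K))%Z).
  { apply le_IZR. pose proof (Rabs_pos K). lra. }
  exists (Z.to_nat (up (Rabs K))).
  rewrite INR_IZR_INZ (Z2Nat.id _ Hz).
  pose proof (Rle_abs K). lra.
Qed.

Ltac fixV V := change (CompleteNormedModule.AbelianGroup R_AbsRing V) with (NormedModule.AbelianGroup R_AbsRing (CompleteNormedModule.NormedModule R_AbsRing V)) in *.

Section Alg.
Context {V : NormedModule R_AbsRing}.

Lemma norm_minus_sym (a b : V) : norm (minus a b) = norm (minus b a).
Proof. rewrite -opp_minus norm_opp. reflexivity. Qed.

Lemma norm_tri3 (a b c : V) : norm (minus a c) <= norm (minus a b) + norm (minus b c).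
Proof. rewrite (minus_trans b). apply: norm_triangle. Qed.

Lemma plus_minus_cancel (c w : V) : minus (plus c w) c = w.
Proof.
  rewrite /minus (plus_comm c w) -plus_assoc plus_opp_r plus_zero_r. reflexivity.
Qed.

Lemma minus_plus_cancel (a b : V) : plus b (minus a b) = a.
Proof.
  rewrite /minus (plus_comm a) plus_assoc plus_opp_r plus_zero_l. reflexivity.
Qed.

Lemma norm_le_minus (a b : V) : norm a <= norm b + norm (minus a b).
Proof. rewrite -{1}(minus_plus_cancel a b). apply: norm_triangle. Qed.

Lemma norm_scal_R (k : R) (x : V) : norm (scal k x) <= Rabs k * norm x.
Proof. exact (norm_scal k x). Qed.

Lemma minus_self (a : V) : minus a a = zero.
Proof. apply minus_eq_zero. Qed.

End Alg.

Section UBP.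
Context {V : CompleteNormedModule R_AbsRing} {W : NormedModule R_AbsRing} {I : Type}
  (T : I -> V -> W).
Hypothesis HT : forall i, is_linear (T i).
Hypothesis Hpt : forall y, exists K, forall i, norm (T i y) <= K.

Lemma ubp_from_ball :
  (exists k (c : V) rho, 0 < rho /\ forall z, norm (minus z c) < rho -> forall i, norm (T i z) <= k) ->
  exists M, 0 < M /\ forall i y, norm (T i y) <= M * norm y.
Proof.
  intros (k & c & rho & Hrho & Hb).
  assert (Hk : forall i : I, 0 <= k).
  { intro i. apply Rle_trans with (norm (T i c)); [apply norm_ge_0|]. apply (Hb c); rewrite minus_self norm_zero; exact Hrho. }
  exists (4 * Rabs k / rho + 1). split.
  { pose proof (Rabs_pos k). assert (0 <= 4 * Rabs k / rho) by (apply Rdiv_le_0_compat; lra). lra. }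
  intros i y.
  destruct (Req_dec (norm y) 0) as [Hy|Hy].
  { apply norm_eq_zero in Hy. subst y. rewrite (linear_zero _ (HT i)) !norm_zero. lra. }
  pose proof (norm_ge_0 y) as Hy0.
  assert (Hyp : 0 < norm y) by lra.
  set (a := rho / (2 * norm y)).
  assert (Ha : 0 < a) by (unfold a; apply Rdiv_lt_0_compat; lra).
  set (w := scal a y).
  assert (Hw : norm w < rho).
  { apply (Rle_lt_trans _ _ _ (norm_scal_R a y)). rewrite Rabs_pos_eq; [|lra].
    unfold a. field_simplify; lra. }
  assert (HTw : norm (T i w) <= 2 * k).
  { assert (E : T i w = minus (T i (plus c w)) (T i c)).
    { rewrite -(linear_minus _ _ _ (HT i)) plus_minus_cancel. reflexivity. }
    rewrite E. eapply Rle_trans; [apply norm_triangle|]. rewrite norm_opp.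
    assert (norm (T i (plus c w)) <= k) by (apply Hb; rewrite plus_minus_cancel; exact Hw).
    assert (norm (T i c) <= k) by (apply Hb; rewrite minus_self norm_zero; exact Hrho).
    lra. }
  assert (Ey : y = scal (/ a) w).
  { unfold w. rewrite scal_assoc. change (mult (/a) a) with (/a * a). rewrite Rinv_l; [|lra].
    rewrite scal_one. reflexivity. }
  rewrite Ey (linear_scal _ (HT i)).
  apply (Rle_trans _ _ _ (norm_scal_R _ _)). rewrite Rabs_pos_eq; [|apply Rlt_le, Rinv_0_lt_compat; exact Ha].
  rewrite -Ey.
  assert (/ a * norm (T i w) <= / a * (2 * k)).
  { apply Rmult_le_compat_l; [apply Rlt_le, Rinv_0_lt_compat; exact Ha| exact HTw]. }
  assert (E2 : / a * (2 * k) = 4 * k / rho * norm y).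
  { unfold a. field. lra. }
  rewrite Rabs_pos_eq; [|apply (Hk i)].
  lra.
Qed.

Definition spec (n : nat) (c : V) (rho : R) (p : V * R) : Prop :=
  norm (minus (fst p) c) < rho / 2 /\ 0 < snd p /\ snd p <= rho / 4 /\
  forall w, norm (minus w (fst p)) <= snd p -> exists i, INR n < norm (T i w).

Hypothesis Hnot : ~ (exists k (c : V) rho, 0 < rho /\
   forall z, norm (minus z c) < rho -> forall i, norm (T i z) <= k).

Lemma spec_ex n c rho : 0 < rho -> exists p, spec n c rho p.
Proof.
  intro Hr.
  assert (H : exists z, norm (minus z c) < rho / 2 /\ exists i, INR n < norm (T i z)).
  { apply NNPP. intro Hn. apply Hnot. exists (INR n), c, (rho / 2). split; [lra|].
    intros z Hz i. apply Rnot_lt_le. intro Hl. apply Hn. exists z. split; [exact Hz| exists i; exact Hl]. }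
  destruct H as (z & Hz & i & Hi).
  destruct (linear_norm _ (HT i)) as (Mi & HMi & HMb).
  set (r' := Rmin (rho / 4) ((norm (T i z) - INR n) / (2 * Mi))).
  assert (Hr'1 : r' <= rho / 4) by apply Rmin_l.
  assert (Hr'2 : r' <= (norm (T i z) - INR n) / (2 * Mi)) by apply Rmin_r.
  assert (Hr'p : 0 < r').
  { unfold r'. apply Rmin_glb_lt; [lra|]. apply Rdiv_lt_0_compat; lra. }
  exists (z, r'). unfold spec; simpl. split; [exact Hz|]. split; [exact Hr'p|]. split; [exact Hr'1|].
  intros w Hw. exists i.
  pose proof (norm_le_minus (T i z) (T i w)) as H1.
  rewrite -(linear_minus _ _ _ (HT i)) in H1.
  pose proof (HMb (minus z w)) as H2. rewrite norm_minus_sym in Hw.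
  assert (Mi * norm (minus z w) <= Mi * r') by (apply Rmult_le_compat_l; [lra|exact Hw]).
  assert (Mi * r' <= (norm (T i z) - INR n) / 2).
  { apply Rmult_le_compat_l with (r := Mi) in Hr'2; [|lra].
    replace (Mi * ((norm (T i z) - INR n) / (2 * Mi))) with ((norm (T i z) - INR n) / 2) in Hr'2 by (field; lra).
    exact Hr'2. }
  set X := norm (T i (minus z w)) in H1 H2. lra.
Qed.

Definition nextp (n : nat) (p : V * R) : V * R :=
  epsilon (inhabits p) (spec n (fst p) (snd p)).

Fixpoint st (n : nat) : V * R :=
  match n with
  | O => (zero, 1)
  | S m => nextp m (st m)
  end.

Lemma st_step n : 0 < snd (st n) -> spec n (fst (st n)) (snd (st n)) (st (S n)).
Proof.
  intro Hp. change (st (S n)) with (nextp n (st n)). unfold nextp.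
  apply (epsilon_spec _ (spec n (fst (st n)) (snd (st n)))). apply spec_ex. exact Hp.
Qed.

Lemma st_pos n : 0 < snd (st n) /\ spec n (fst (st n)) (snd (st n)) (st (S n)).
Proof.
  induction n as [|n IH].
  - assert (Hp : 0 < snd (st 0)) by (simpl; lra). split; [exact Hp|]. apply st_step, Hp.
  - destruct IH as [_ Hs]. destruct Hs as (_ & Hp & _).
    split; [exact Hp|]. apply st_step, Hp.
Qed.

Let c n := fst (st n).
Let rho n := snd (st n).

Lemma rho_pow n : rho n <= (/4) ^ n.
Proof.
  induction n as [|n IH]. { unfold rho; simpl; lra. }
  destruct (st_pos n) as [_ (_ & _ & H & _)]. unfold rho in *. simpl pow. lra.
Qed.

Lemma c_dist k n : norm (minus (c (n + k)) (c n)) <= 2 / 3 * rho n.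
Proof.
  revert n. induction k as [|k IH]; intro n.
  - rewrite Nat.add_0_r minus_self norm_zero. destruct (st_pos n) as [H _]. unfold rho. lra.
  - replace (n + S k)%nat with (S n + k)%nat by lia.
    eapply Rle_trans; [apply (norm_tri3 _ (c (S n)))|].
    pose proof (IH (S n)).
    destruct (st_pos n) as [_ (H1 & _ & H2 & _)]. unfold c, rho in *. fixV V. lra.
Qed.

Lemma ubp_false : False.
Proof.
  set (Fl := filtermap c eventually).
  assert (PF : ProperFilter Fl) by (apply filtermap_proper_filter, eventually_filter).
  assert (Hc : cauchy Fl).
  { intro eps. destruct (pow_lt_1_zero (/4) ltac:(rewrite Rabs_pos_eq; lra) eps (cond_pos eps)) as [N HN].
    exists (c N). exists N. intros m Hm. apply: norm_compat1.
    replace m with (N + (m - N))%nat by lia.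
    eapply Rle_lt_trans; [apply c_dist|].
    pose proof (HN N (le_n N)) as H1. rewrite Rabs_pos_eq in H1; [|apply pow_le; lra].
    pose proof (rho_pow N). destruct (st_pos N) as [Hp _]. unfold rho in *. lra. }
  pose proof (complete_cauchy Fl PF Hc) as HL.
  set (L := lim Fl) in HL.
  assert (Hfar : forall n, exists i, INR n < norm (T i L)).
  { intro n. destruct (st_pos n) as [_ (_ & Hp & _ & Hw)].
    apply Hw. fold (st (S n)). change (fst (st (S n))) with (c (S n)).
    assert (Hnf := @norm_factor_gt_0 R_AbsRing V).
    set (e := rho (S n) / (3 * @norm_factor R_AbsRing V)).
    assert (He : 0 < e) by (unfold e, rho; apply Rdiv_lt_0_compat; lra).
    destruct (HL (mkposreal e He)) as [N0 HN0].
    set (m := (S n + N0)%nat).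
    pose proof (HN0 m ltac:(unfold m; lia)) as Hb. simpl in Hb.
    pose proof (@norm_compat2 R_AbsRing V L (c m) (mkposreal e He) Hb) as Hb2. simpl in Hb2. clear Hb.
    pose proof (c_dist N0 (S n)) as Hd. fold m in Hd.
    eapply Rle_trans; [apply (norm_tri3 _ (c m))|].
    rewrite norm_minus_sym in Hb2.
    assert (@norm_factor R_AbsRing V * e = rho (S n) / 3) by (unfold e; field; lra).
    unfold rho, c in *. fixV V. lra. }
  destruct (Hpt L) as [K HK].
  destruct (exists_INR_gt K) as [n Hn].
  destruct (Hfar n) as [i Hi]. pose proof (HK i). lra.
Qed.

End UBP.

Lemma ubp {V : CompleteNormedModule R_AbsRing} {W : NormedModule R_AbsRing} {I : Type}
  (T : I -> V -> W) :
  (forall i, is_linear (T i)) -> (forall y, exists K, forall i, norm (T i y) <= K) ->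
  exists M, 0 < M /\ forall i y, norm (T i y) <= M * norm y.
Proof.
  intros HT Hpt. apply (ubp_from_ball T HT).
  apply NNPP. intro Hn. exact (ubp_false T HT Hpt Hn).
Qed.

Section Alg2.
Context {V : NormedModule R_AbsRing}.

Lemma minus_plus_l (a b c : V) : minus (plus a b) c = plus (minus a c) b.
Proof.
  rewrite /minus -!plus_assoc. f_equal. apply plus_comm.
Qed.

Lemma minus_plus_plus (a b c d : V) : minus (plus a b) (plus c d) = plus (minus a c) (minus b d).
Proof.
  rewrite /minus opp_plus -!plus_assoc. f_equal. rewrite !plus_assoc. f_equal. apply plus_comm.
Qed.

Lemma scal_zero0 (u : V) : scal 0 u = zero.
Proof. exact (scal_zero_l u). Qed.

Lemma norm_scal_abs_le (k : R) (u : V) M : norm u <= M -> norm (scal k u) <= Rabs k * M.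
Proof.
  intro H. apply (Rle_trans _ _ _ (norm_scal_R k u)).
  apply Rmult_le_compat_l; [apply Rabs_pos|exact H].
Qed.

End Alg2.

Definition wcont {V : NormedModule R_AbsRing} (f : R -> V) (a b : R) : Prop :=
  forall s, a <= s <= b -> forall eps, 0 < eps -> exists d, 0 < d /\
    forall s', a <= s' <= b -> Rabs (s' - s) < d -> norm (minus (f s') (f s)) < eps.

Definition wderiv {V : NormedModule R_AbsRing} (G g : R -> V) (a b : R) : Prop :=
  forall s, a <= s <= b -> forall eps, 0 < eps -> exists d, 0 < d /\
    forall s', a <= s' <= b -> Rabs (s' - s) < d ->
      norm (minus (minus (G s') (G s)) (scal (s' - s) (g s))) <= eps * Rabs (s' - s).

Definition clamp (a b s : R) : R := Rmax a (Rmin b s).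

Lemma clamp_in a b s : a <= b -> a <= clamp a b s <= b.
Proof.
  intro H. unfold clamp. split; [apply Rmax_l|].
  apply Rmax_lub; [exact H|apply Rmin_l].
Qed.

Lemma clamp_id a b s : a <= s <= b -> clamp a b s = s.
Proof.
  intros [H1 H2]. unfold clamp. rewrite (Rmin_right _ _ H2). apply Rmax_right, H1.
Qed.

Lemma clamp_lip a b s s' : a <= b -> Rabs (clamp a b s - clamp a b s') <= Rabs (s - s').
Proof.
  intro H. unfold clamp, Rmax, Rmin.
  repeat (destruct Rle_dec); apply Rabs_le; split;
  pose proof (Rle_abs (s - s')); pose proof (Rabs_pos (s-s'));
  pose proof (Rabs_maj2 (s-s')); lra.
Qed.

Lemma wcont_clamp {V : NormedModule R_AbsRing} (f : R -> V) a b :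
  a <= b -> wcont f a b -> forall x, continuous (fun s => f (clamp a b s)) x.
Proof.
  intros Hab Hf x. apply filterlim_locally. intro eps.
  destruct (Hf (clamp a b x) (clamp_in a b x Hab) eps (cond_pos eps)) as (d & Hd & Hfd).
  exists (mkposreal d Hd). intros y Hy. change (Rabs (y - x) < d) in Hy.
  apply: norm_compat1. apply Hfd; [apply clamp_in, Hab|].
  eapply Rle_lt_trans; [apply clamp_lip, Hab| exact Hy].
Qed.

Lemma wcont_sub {V : NormedModule R_AbsRing} (f : R -> V) a b a' b' :
  a <= a' -> b' <= b -> wcont f a b -> wcont f a' b'.
Proof.
  intros H1 H2 Hf s Hs eps He. destruct (Hf s ltac:(lra) eps He) as (d & Hd & Hfd).
  exists d. split; [exact Hd|]. intros s' Hs' Hss. apply Hfd; [lra|exact Hss].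
Qed.

Lemma ex_RInt_wcont {V : CompleteNormedModule R_AbsRing} (f : R -> V) a b :
  a <= b -> wcont f a b -> ex_RInt f a b.
Proof.
  intros Hab Hf.
  apply (ex_RInt_ext (fun s => f (clamp a b s))).
  { intros x Hx. rewrite Rmin_left in Hx; [|exact Hab]. rewrite Rmax_right in Hx; [|exact Hab].
    rewrite clamp_id; [reflexivity|lra]. }
  apply ex_RInt_continuous. intros z _. apply (wcont_clamp f a b Hab Hf).
Qed.

Lemma ftc_w {V : CompleteNormedModule R_AbsRing} (G g : R -> V) a b :
  a <= b -> wderiv G g a b -> wcont g a b -> is_RInt g a b (minus (G b) (G a)).
Proof.
  intros Hab HG Hg.
  set (Gt := fun y => plus (G (clamp a b y)) (scal (y - clamp a b y) (g (clamp a b y)))).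
  set (gt := fun y => g (clamp a b y)).
  assert (HGt : forall y, a <= y <= b -> Gt y = G y).
  { intros y Hy. unfold Gt. rewrite (clamp_id _ _ _ Hy). rewrite Rminus_diag.
    rewrite scal_zero0 plus_zero_r. reflexivity. }
  assert (Hd : forall x, Rmin a b <= x <= Rmax a b -> is_derive Gt x (gt x)).
  { intros x Hx. rewrite Rmin_left in Hx; [|exact Hab]. rewrite Rmax_right in Hx; [|exact Hab].
    split; [apply is_linear_scal_l|].
    intros x' Hx'. pose proof (@is_filter_lim_locally_unique R_AbsRing R_NormedModule x x' Hx') as Ex. subst x'.
    intro eps.
    destruct (HG x Hx (eps/2) ltac:(destruct eps; simpl; lra)) as (d1 & Hd1 & HG1).
    destruct (Hg x Hx (eps/2) ltac:(destruct eps; simpl; lra)) as (d2 & Hd2 & Hg2).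
    exists (mkposreal (Rmin d1 d2) (Rmin_pos _ _ Hd1 Hd2)). intros y Hy.
    change (Rabs (y - x) < Rmin d1 d2) in Hy.
    set (c := clamp a b y).
    assert (Hc : a <= c <= b) by (apply clamp_in, Hab).
    assert (Hcx : Rabs (c - x) <= Rabs (y - x)).
    { pose proof (clamp_lip a b y x Hab) as Hl. rewrite (clamp_id a b x Hx) in Hl. exact Hl. }
    assert (Hyc : Rabs (y - c) <= Rabs (y - x)).
    { unfold c, clamp, Rmax, Rmin. repeat destruct Rle_dec; apply Rabs_le; split;
      pose proof (Rle_abs (y - x)); pose proof (Rabs_pos (y-x)); pose proof (Rabs_maj2 (y-x));
      unfold Rabs in *; repeat destruct Rcase_abs; lra. }
    assert (E : minus (minus (Gt y) (Gt x)) (scal (minus y x) (gt x)) =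
                plus (minus (minus (G c) (G x)) (scal (c - x) (g x))) (scal (y - c) (minus (g c) (g x)))).
    { rewrite (HGt x Hx). unfold Gt, gt. fold c. rewrite (clamp_id a b x Hx).
      change (minus y x) with (y - x). replace (y - x) with ((c - x) + (y - c)) by ring.
      rewrite (scal_distr_r (c - x) (y - c) (g x)) (minus_plus_l (G c) _ (G x)) minus_plus_plus scal_minus_distr_l. reflexivity. }
    enough (Hfin : norm (minus (minus (Gt y) (Gt x)) (scal (minus y x) (gt x))) <= eps * Rabs (y - x)) by exact Hfin.
    rewrite E. apply: Rle_trans; [apply: norm_triangle|].
    assert (H1 : norm (minus (minus (G c) (G x)) (scal (c - x) (g x))) <= eps / 2 * Rabs (y - x)).
    { apply (Rle_trans _ _ _ (HG1 c Hc ltac:(pose proof (Rmin_l d1 d2); lra))).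
      apply Rmult_le_compat_l; [destruct eps; simpl; lra| exact Hcx]. }
    assert (H2 : norm (scal (y - c) (minus (g c) (g x))) <= Rabs (y - x) * (eps / 2)).
    { apply: Rle_trans; [apply: norm_scal_R|].
      destruct (Req_dec c x) as [Ec|Ec].
      { rewrite Ec minus_self norm_zero. pose proof (Rabs_pos (y-x)). pose proof (Rabs_pos (y - x)).
        destruct eps; simpl. nra. }
      apply Rmult_le_compat; [apply Rabs_pos|apply norm_ge_0|exact Hyc|].
      apply Rlt_le, Hg2; [exact Hc|]. pose proof (Rmin_r d1 d2). lra. }
    lra. }
  assert (Hc : forall x, Rmin a b <= x <= Rmax a b -> continuous gt x).
  { intros x _. apply (wcont_clamp g a b Hab Hg). }
  pose proof (is_RInt_derive Gt gt a b Hd Hc) as H.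
  rewrite (HGt a ltac:(lra)) (HGt b ltac:(lra)) in H.
  apply (is_RInt_ext gt). 2: exact H.
  intros x Hx. rewrite Rmin_left in Hx; [|exact Hab]. rewrite Rmax_right in Hx; [|exact Hab].
  unfold gt. rewrite clamp_id; [reflexivity|lra].
Qed.

Lemma Riemann_sum_lin {U W : NormedModule R_AbsRing} (l : U -> W) (f : R -> U) ptd :
  is_linear l -> Riemann_sum (fun s => l (f s)) ptd = l (Riemann_sum f ptd).
Proof.
  intro Hl. induction ptd as [x0|h s IH] using SF_cons_ind.
  - rewrite /Riemann_sum /=. rewrite (linear_zero _ Hl). reflexivity.
  - rewrite !Riemann_sum_cons IH (linear_plus _ Hl) (linear_scal _ Hl). reflexivity.
Qed.

Lemma is_RInt_lin {U W : NormedModule R_AbsRing} (l : U -> W) (f : R -> U) a b I :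
  is_linear l -> is_RInt f a b I -> is_RInt (fun s => l (f s)) a b (l I).
Proof.
  intros Hl Hf. unfold is_RInt in *.
  apply (filterlim_ext (fun ptd => l (scal (sign (b - a)) (Riemann_sum f ptd)))).
  { intro ptd. rewrite (linear_scal _ Hl) (Riemann_sum_lin l f ptd Hl). reflexivity. }
  eapply filterlim_comp; [exact Hf|]. apply linear_cont, Hl.
Qed.

Lemma wcont_norm_bounded {V : NormedModule R_AbsRing} (f : R -> V) a b :
  a <= b -> wcont f a b -> exists M, forall s, a <= s <= b -> norm (f s) <= M.
Proof.
  intros Hab Hf.
  set (h := fun s => norm (f (clamp a b s))).
  destruct (continuity_ab_maj h a b Hab) as (Mx & HM & _).
  { intros c _. apply continuity_pt_filterlim.
    apply filterlim_locally. intro eps.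
    destruct (Hf (clamp a b c) (clamp_in a b c Hab) eps (cond_pos eps)) as (d & Hd & Hfd).
    exists (mkposreal d Hd). intros y Hy. change (Rabs (y - c) < d) in Hy.
    change (Rabs (h y - h c) < eps). unfold h.
    eapply Rle_lt_trans; [apply norm_triangle_inv|].
    apply Hfd; [apply clamp_in, Hab|].
    eapply Rle_lt_trans; [apply clamp_lip, Hab| exact Hy]. }
  exists (h Mx). intros s Hs. pose proof (HM s Hs) as H. unfold h in H.
  rewrite (clamp_id _ _ _ Hs) in H. exact H.
Qed.

Lemma wcont_real_bounded (f : R -> R) a b :
  a <= b -> wcont f a b -> exists M, forall s, a <= s <= b -> f s <= M.
Proof.
  intros Hab Hf. destruct (wcont_norm_bounded f a b Hab Hf) as [M HM].
  exists M. intros s Hs. pose proof (HM s Hs) as H. change (Rabs (f s) <= M) in H.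
  pose proof (Rle_abs (f s)). lra.
Qed.

Lemma cont_wcont_R (f : R -> R) a b :
  (forall s, a <= s <= b -> continuous f s) -> wcont f a b.
Proof.
  intros Hc s Hs eps He. specialize (Hc s Hs).
  unfold continuous in Hc. move/filterlim_locally: Hc => Hc. destruct (Hc (mkposreal eps He)) as [d Hd].
  exists d. split; [apply cond_pos|]. intros s' _ Hs'. apply (Hd s'). exact Hs'.
Qed.

Section SG.
Context {F Fm : CompleteNormedModule R_AbsRing} (im : F -> Fm) (S : R -> Fm -> Fm)
  (SFm : R -> Fm -> F) (um : R -> R).
Hypothesis Him : is_linear im.
Hypothesis HS : C0_semigroup S.
Hypothesis HSFm : forall t f, 0 < t -> im (SFm t f) = S t f.
Hypothesis Humcont : forall t, 0 < t -> continuous um t.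
Hypothesis HSFmbd : forall t f, 0 < t -> norm (SFm t f) <= um t * norm f.

Lemma S_lin r : 0 <= r -> is_linear (S r).
Proof. destruct HS as [H _]. apply H. Qed.

Lemma S_far a b : 0 < a -> exists M, 0 <= M /\ forall r y, a <= r <= b -> norm (S r y) <= M * norm y.
Proof.
  intros Ha.
  destruct (Rle_dec a b) as [Hab|Hab].
  2: { exists 0. split; [lra|]. intros r y Hr. lra. }
  destruct (wcont_real_bounded um a b Hab) as [U HU].
  { apply cont_wcont_R. intros s Hs. apply Humcont. lra. }
  destruct (linear_norm _ Him) as (Mi & HMi & HMb).
  exists (Mi * Rabs U). split.
  { pose proof (Rabs_pos U). nra. }
  intros r y Hr. rewrite -(HSFm r y); [|lra].
  apply: Rle_trans; [apply HMb|].
  rewrite Rmult_assoc. apply Rmult_le_compat_l; [lra|].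
  apply: Rle_trans; [apply HSFmbd; lra|].
  apply Rmult_le_compat_r; [apply norm_ge_0|]. pose proof (HU r Hr). pose proof (Rle_abs U). lra.
Qed.

Lemma S_bound01 : exists M, 0 < M /\ forall r y, 0 <= r <= 1 -> norm (S r y) <= M * norm y.
Proof.
  set (T := fun (i : {r : R | 0 <= r <= 1}) => S (proj1_sig i)).
  destruct (ubp T) as (M & HM & HMb).
  { intros [r Hr]. apply S_lin. simpl. lra. }
  { intro y. destruct HS as (_ & _ & _ & Hc).
    destruct (Hc y 1 ltac:(lra)) as (d & Hd & Hdb).
    destruct (S_far (Rmin d 1) 1 ltac:(apply Rmin_pos; lra)) as (Mf & HMf & HMfb).
    exists (norm y + 1 + Mf * norm y). intros [r Hr]. unfold T; simpl.
    pose proof (norm_ge_0 y).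
    destruct (Rlt_dec r d) as [Hrd|Hrd].
    - pose proof (Hdb r ltac:(lra)) as H1. pose proof (norm_le_minus (S r y) y) as H2.
      assert (0 <= Mf * norm y) by nra. lra.
    - assert (Rmin d 1 <= r <= 1) by (pose proof (Rmin_l d 1); lra).
      pose proof (HMfb r y H0). lra. }
  exists M. split; [exact HM|]. intros r y Hr. exact (HMb (exist _ r Hr) y).
Qed.

Lemma S_bound (R0 : R) : exists M, 0 < M /\ forall r y, 0 <= r <= R0 -> norm (S r y) <= M * norm y.
Proof.
  destruct S_bound01 as (M1 & HM1 & HM1b).
  destruct (S_far 1 R0 ltac:(lra)) as (Mf & HMf & HMfb).
  exists (M1 + Mf). split; [lra|]. intros r y Hr. pose proof (norm_ge_0 y).
  destruct (Rle_dec r 1) as [Hr1|Hr1].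
  - pose proof (HM1b r y ltac:(lra)). nra.
  - pose proof (HMfb r y ltac:(lra)). nra.
Qed.

Lemma S_add r q y : 0 <= r -> 0 <= q -> S (r + q) y = S r (S q y).
Proof. destruct HS as (_ & _ & H & _). apply H. Qed.

Lemma S_zero y : S 0 y = y.
Proof. destruct HS as (_ & H & _). apply H. Qed.

Lemma S_strong y r : 0 <= r -> forall eps, 0 < eps -> exists d, 0 < d /\
  forall r', 0 <= r' -> Rabs (r' - r) < d -> norm (minus (S r' y) (S r y)) < eps.
Proof.
  intros Hr eps He.
  destruct (S_bound (r + 1)) as (M & HM & HMb).
  destruct HS as (_ & _ & _ & Hc).
  destruct (Hc y (eps / M) ltac:(apply Rdiv_lt_0_compat; lra)) as (d & Hd & Hdb).
  exists (Rmin d 1). split; [apply Rmin_pos; lra|]. intros r' Hr' Hrr.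
  pose proof (Rmin_l d 1). pose proof (Rmin_r d 1).
  apply Rabs_def2 in Hrr.
  destruct (Rle_dec r r') as [Hle|Hle].
  - replace r' with (r + (r' - r)) by ring. rewrite S_add; [|lra|lra].
    rewrite -(linear_minus _ _ _ (S_lin r Hr)).
    apply: Rle_lt_trans; [apply (HMb r); lra|].
    pose proof (Hdb (r' - r) ltac:(lra)) as H1.
    replace eps with (M * (eps / M)) by (field; lra).
    apply Rmult_lt_compat_l; [lra|exact H1].
  - replace r with (r' + (r - r')) by ring. rewrite S_add; [|lra|lra].
    rewrite -(linear_minus _ _ _ (S_lin r' Hr')).
    apply: Rle_lt_trans; [apply (HMb r'); lra|].
    pose proof (Hdb (r - r') ltac:(lra)) as H1. rewrite norm_minus_sym.
    replace eps with (M * (eps / M)) by (field; lra).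
    apply Rmult_lt_compat_l; [lra|exact H1].
Qed.

End SG.

Section Alg3.
Context {V : NormedModule R_AbsRing}.

Lemma g1 (a b c : V) : minus a (plus b c) = minus (minus a b) c.
Proof. rewrite /minus opp_plus plus_assoc. reflexivity. Qed.

Lemma g2 (a b c : V) : minus (plus a b) (plus a c) = minus b c.
Proof. rewrite minus_plus_plus minus_self plus_zero_l. reflexivity. Qed.

Lemma g3 (b c : V) : minus b (minus b c) = c.
Proof. rewrite /minus opp_plus opp_opp plus_assoc plus_opp_r plus_zero_l. reflexivity. Qed.

Lemma g4 (a b : V) : plus a b = minus b (opp a).
Proof. rewrite /minus opp_opp plus_comm. reflexivity. Qed.

Lemma g5 (a b c d : V) : plus (minus a b) (minus (minus c a) d) = minus (minus c b) d.
Proof.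
  rewrite /minus -!plus_assoc (plus_comm a) -!plus_assoc (plus_comm (opp d) a).
  rewrite (plus_assoc (opp a) a) plus_opp_l plus_zero_l.
  rewrite plus_assoc (plus_comm (opp b) c) -plus_assoc. reflexivity.
Qed.

Lemma g6 (a b c d : V) : minus (minus a b) (minus c d) = minus (minus a c) (minus b d).
Proof.
  rewrite /minus !opp_plus !opp_opp -!plus_assoc. f_equal.
  rewrite (plus_comm (opp b)) -!plus_assoc. f_equal. apply plus_comm.
Qed.

Lemma norm_minus_le (a b : V) : norm (minus a b) <= norm a + norm b.
Proof. rewrite -(norm_opp b). apply: norm_triangle. Qed.

Lemma minus_zero_eq (a b : V) : norm (minus a b) = 0 -> a = b.
Proof.
  intro H. apply norm_eq_zero in H. rewrite -(minus_plus_cancel a b) H plus_zero_r. reflexivity.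
Qed.

Lemma scal_inv_id (h : R) (u : V) : h <> 0 -> scal h (scal (/ h) u) = u.
Proof.
  intro Hh. rewrite scal_assoc. change (mult h (/ h)) with (h * / h). rewrite Rinv_r; [|exact Hh].
  exact (scal_one u).
Qed.

End Alg3.

Lemma rd_bound {V : NormedModule R_AbsRing} (Shx x w : V) (h eps : R) :
  0 < h -> norm (minus (scal (/ h) (minus Shx x)) w) < eps ->
  norm (minus (minus Shx x) (scal h w)) <= h * eps.
Proof.
  intros Hh H.
  assert (E : minus (minus Shx x) (scal h w) = scal h (minus (scal (/ h) (minus Shx x)) w)).
  { rewrite scal_minus_distr_l scal_inv_id; [reflexivity|lra]. }
  rewrite E. apply: Rle_trans; [apply norm_scal_R|]. rewrite Rabs_pos_eq; [|lra].
  apply Rmult_le_compat_l; lra.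
Qed.

Section Deriv.
Context {Fm : CompleteNormedModule R_AbsRing} (S : R -> Fm -> Fm) (X Xd W : R -> Fm) (t0 t M : R).
Hypothesis Hlin : forall r, 0 <= r -> is_linear (S r).
Hypothesis Hadd : forall r q y, 0 <= r -> 0 <= q -> S (r + q) y = S r (S q y).
Hypothesis HM : 0 < M.
Hypothesis HMb : forall r y, 0 <= r <= t - t0 -> norm (S r y) <= M * norm y.
Hypothesis Hstrong : forall y r, 0 <= r -> forall eps, 0 < eps -> exists d, 0 < d /\
  forall r', 0 <= r' -> Rabs (r' - r) < d -> norm (minus (S r' y) (S r y)) < eps.
Hypothesis Hgen : forall s, t0 <= s <= t -> right_deriv0 S (X s) (W s).
Hypothesis HXd : wderiv X Xd t0 t.

Lemma G_wderiv : wderiv (fun s => S (t - s) (X s)) (fun s => S (t - s) (minus (Xd s) (W s))) t0 t.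
Proof.
  intros s Hs eps He.
  set (r := t - s).
  assert (Hr : 0 <= r <= t - t0) by (unfold r; lra).
  set (e1 := eps / (4 * M)). set (e2 := eps / 4).
  assert (He1 : 0 < e1) by (unfold e1; apply Rdiv_lt_0_compat; lra).
  assert (He2 : 0 < e2) by (unfold e2; lra).
  destruct (HXd s Hs e1 He1) as (d1 & Hd1 & H1).
  destruct (Hstrong (Xd s) r ltac:(lra) e2 He2) as (d2 & Hd2 & H2).
  destruct (Hstrong (W s) r ltac:(lra) e2 He2) as (d3 & Hd3 & H3).
  destruct (Hgen s Hs e1 He1) as (d4 & Hd4 & H4).
  set (d := Rmin (Rmin d1 d2) (Rmin d3 d4)).
  assert (Hd : 0 < d) by (unfold d; repeat apply Rmin_pos; lra).
  exists d. split; [exact Hd|]. intros s' Hs' Hss'.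
  assert (Hdd : d <= d1 /\ d <= d2 /\ d <= d3 /\ d <= d4).
  { unfold d. pose proof (Rmin_l (Rmin d1 d2) (Rmin d3 d4)). pose proof (Rmin_r (Rmin d1 d2) (Rmin d3 d4)).
    pose proof (Rmin_l d1 d2). pose proof (Rmin_r d1 d2). pose proof (Rmin_l d3 d4). pose proof (Rmin_r d3 d4). lra. }
  set (k := s' - s). set (r' := t - s').
  assert (Hr' : 0 <= r' <= t - t0) by (unfold r'; lra).
  assert (Hrr : r' = r - k) by (unfold r', r, k; ring).
  set (x' := X s'). set (x := X s). set (v := Xd s). set (w := W s).
  change (norm (minus (minus (S r' x') (S r x)) (scal k (S r (minus v w)))) <= eps * Rabs k).
  rewrite -g1.
  set (Z1 := S r' (plus x (scal k v))).
  set (Z2 := plus (S r' x) (scal k (S r v))).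
  set (Q := plus (S r x) (scal k (S r (minus v w)))).
  assert (HT1 : norm (minus (S r' x') Z1) <= M * (e1 * Rabs k)).
  { unfold Z1. rewrite -(linear_minus _ _ _ (Hlin r' ltac:(lra))) g1.
    apply: Rle_trans; [apply HMb; lra|]. apply Rmult_le_compat_l; [lra|].
    apply H1; [exact Hs'|lra]. }
  assert (HT2 : norm (minus Z1 Z2) <= Rabs k * e2).
  { unfold Z1, Z2. rewrite (linear_plus _ (Hlin r' ltac:(lra))) (linear_scal _ (Hlin r' ltac:(lra))) g2.
    rewrite -scal_minus_distr_l. apply norm_scal_abs_le. apply Rlt_le, H2; [lra|].
    rewrite Hrr. replace (r - k - r) with (- k) by ring. rewrite Rabs_Ropp. unfold k. lra. }
  assert (EQ3 : minus Z2 Q = plus (minus (S r' x) (S r x)) (scal k (S r w))).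
  { unfold Z2, Q. rewrite (linear_minus _ _ _ (Hlin r ltac:(lra))) scal_minus_distr_l minus_plus_plus g3.
    reflexivity. }
  assert (HT3 : norm (minus Z2 Q) <= M * (e1 * Rabs k) + Rabs k * e2).
  { rewrite EQ3.
    destruct (Rtotal_order k 0) as [Hk|[Hk|Hk]].
    -
      set (q := - k).
      assert (Hq : 0 < q) by (unfold q; lra).
      assert (Er' : r' = r + q) by (rewrite Hrr; unfold q; ring).
      rewrite Er' (Hadd r q x) ?(Hadd r q x); [|lra|lra].
      rewrite -(linear_minus _ _ _ (Hlin r ltac:(lra))) -(linear_scal _ (Hlin r ltac:(lra))).
      rewrite -(linear_plus _ (Hlin r ltac:(lra))).
      replace k with (opp q) by (unfold q, opp; simpl; ring).
      rewrite scal_opp_l.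
      change (plus (minus (S q x) x) (opp (scal q w))) with (minus (minus (S q x) x) (scal q w)).
      apply: Rle_trans; [apply HMb; lra|].
      assert (Hb : norm (minus (minus (S q x) x) (scal q w)) <= q * e1).
      { apply: rd_bound; [exact Hq|]. apply H4. split; [exact Hq|].
        unfold q, k in *. apply Rabs_def2 in Hss'. lra. }
      assert (Rabs (opp q) = q) by (change (Rabs (- q) = q); rewrite Rabs_Ropp Rabs_pos_eq; lra).
      rewrite H. pose proof (Rabs_pos k). assert (0 <= q * e2) by nra.
      assert (M * norm (minus (minus (S q x) x) (scal q w)) <= M * (q * e1)) by (apply Rmult_le_compat_l; lra).
      lra.
    -
      assert (Er : r' = r) by lra. rewrite Er Hk minus_self scal_zero0 plus_zero_r norm_zero Rabs_R0. lra.
    -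
      assert (Er : r = r' + k) by (rewrite Hrr; ring).
      rewrite {1}Er (Hadd r' k x); [|lra|lra].
      rewrite g4 opp_minus.
      apply: Rle_trans; [apply (norm_tri3 _ (scal k (S r' w)))|].
      assert (Ha : norm (minus (scal k (S r w)) (scal k (S r' w))) <= Rabs k * e2).
      { rewrite -scal_minus_distr_l. apply: norm_scal_abs_le. rewrite norm_minus_sym. apply Rlt_le, H3; [lra|].
        rewrite Hrr. replace (r - k - r) with (- k) by ring. rewrite Rabs_Ropp. unfold k. lra. }
      assert (Hb2 : norm (minus (scal k (S r' w)) (minus (S r' (S k x)) (S r' x))) <= M * (k * e1)).
      { rewrite -(linear_minus _ _ _ (Hlin r' ltac:(lra))) -(linear_scal _ (Hlin r' ltac:(lra))).
        rewrite -(linear_minus _ _ _ (Hlin r' ltac:(lra))).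
        apply: Rle_trans; [apply HMb; lra|]. apply Rmult_le_compat_l; [lra|].
        rewrite norm_minus_sym. apply: rd_bound; [exact Hk|]. apply H4. split; [exact Hk|].
        unfold k in *. apply Rabs_def2 in Hss'. lra. }
      rewrite (Rabs_pos_eq k) in Ha |- *; [|lra].
      assert (0 <= M * (e1 * k)) by (apply Rmult_le_pos; [lra|apply Rmult_le_pos; lra]).
      set A1 := norm (minus (scal k (S r w)) (scal k (S r' w))) in Ha *.
      set A2 := norm (minus (scal k (S r' w)) (minus (S r' (S k x)) (S r' x))) in Hb2 *.
      lra. }
  apply: Rle_trans; [apply (norm_tri3 _ Z1)|].
  apply: Rle_trans; [apply Rplus_le_compat_l, (norm_tri3 _ Z2)|].
  assert (Heq : M * e1 = eps / 4) by (unfold e1; field; lra).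
  pose proof (Rabs_pos k).
  assert (M * (e1 * Rabs k) = eps / 4 * Rabs k) by (rewrite -Heq; ring).
  set N1 := norm (minus (S r' x') Z1) in HT1 *.
  set N2 := norm (minus Z1 Z2) in HT2 *.
  set N3 := norm (minus Z2 Q) in HT3 *.
  unfold e2 in *. lra.
Qed.
End Deriv.

Section JointC.
Context {Fm : CompleteNormedModule R_AbsRing} (S : R -> Fm -> Fm) (t0 t M : R).
Hypothesis Hlin : forall r, 0 <= r -> is_linear (S r).
Hypothesis HM : 0 < M.
Hypothesis HMb : forall r y, 0 <= r <= t - t0 -> norm (S r y) <= M * norm y.
Hypothesis Hstrong : forall y r, 0 <= r -> forall eps, 0 < eps -> exists d, 0 < d /\
  forall r', 0 <= r' -> Rabs (r' - r) < d -> norm (minus (S r' y) (S r y)) < eps.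

Lemma S_wcont (Y : R -> Fm) : wcont Y t0 t -> wcont (fun s => S (t - s) (Y s)) t0 t.
Proof.
  intros HY s Hs eps He.
  destruct (HY s Hs (eps / (2 * M)) ltac:(apply Rdiv_lt_0_compat; lra)) as (d1 & Hd1 & H1).
  destruct (Hstrong (Y s) (t - s) ltac:(lra) (eps / 2) ltac:(lra)) as (d2 & Hd2 & H2).
  exists (Rmin d1 d2). split; [apply Rmin_pos; lra|]. intros s' Hs' Hss.
  pose proof (Rmin_l d1 d2). pose proof (Rmin_r d1 d2).
  apply: Rle_lt_trans; [apply (norm_tri3 _ (S (t - s') (Y s)))|].
  rewrite -(linear_minus _ _ _ (Hlin (t - s') ltac:(lra))).
  assert (Ha : norm (S (t - s') (minus (Y s') (Y s))) <= M * (eps / (2 * M))).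
  { apply: Rle_trans; [apply HMb; lra|]. apply Rmult_le_compat_l; [lra|]. apply Rlt_le, H1; [exact Hs'|lra]. }
  assert (Hb : norm (minus (S (t - s') (Y s)) (S (t - s) (Y s))) < eps / 2).
  { apply H2; [lra|]. replace (t - s' - (t - s)) with (- (s' - s)) by ring. rewrite Rabs_Ropp. lra. }
  assert (M * (eps / (2 * M)) = eps / 2) by (field; lra).
  set N1 := norm (S (t - s') (minus (Y s') (Y s))) in Ha *.
  set N2 := norm (minus (S (t - s') (Y s)) (S (t - s) (Y s))) in Hb *.
  lra.
Qed.

End JointC.

Lemma at_left_intro (b a : R) (Pr : R -> Prop) :
  a < b -> (forall u, a < u < b -> Pr u) -> at_left b Pr.
Proof.
  intros Hab H. exists (mkposreal (b - a) ltac:(lra)). intros y Hy Hyb.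
  change (Rabs (y - b) < b - a) in Hy. apply H. apply Rabs_def2 in Hy. lra.
Qed.

Lemma at_left_pt (b a : R) (Pr : R -> Prop) :
  a < b -> at_left b Pr -> exists u, a < u < b /\ Pr u.
Proof.
  intros Hab [d Hd]. set (u := b - Rmin (d / 2) ((b - a) / 2)).
  assert (H1 : 0 < Rmin (d / 2) ((b - a) / 2)) by (apply Rmin_pos; [destruct d; simpl; lra|lra]).
  pose proof (Rmin_l (d / 2) ((b - a) / 2)). pose proof (Rmin_r (d / 2) ((b - a) / 2)).
  exists u. unfold u. split; [lra|]. apply Hd; [|lra].
  change (Rabs (b - Rmin (d / 2) ((b - a) / 2) - b) < d).
  rewrite Rabs_left; [|lra]. destruct d; simpl in *; lra.
Qed.

Lemma mono_lim (Phi : R -> R) a b B :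
  a < b -> (forall x y, a <= x -> x <= y -> y < b -> Phi x <= Phi y) ->
  (forall x, a <= x < b -> Phi x <= B) ->
  exists I, (forall x, a <= x < b -> Phi x <= I) /\
    (forall eps, 0 < eps -> exists x, a <= x < b /\ I - eps < Phi x) /\
    filterlim Phi (at_left b) (locally I).
Proof.
  intros Hab Hmon HB.
  set (E := fun z => exists x, a <= x < b /\ z = Phi x).
  destruct (completeness E) as [I [HI1 HI2]].
  { exists B. intros z (x & Hx & ->). apply HB, Hx. }
  { exists (Phi a). exists a. split; [lra|reflexivity]. }
  assert (Hup : forall x, a <= x < b -> Phi x <= I) by (intros x Hx; apply HI1; exists x; split; [exact Hx|reflexivity]).
  assert (Happ : forall eps, 0 < eps -> exists x, a <= x < b /\ I - eps < Phi x).
  { intros eps He. apply NNPP. intro Hn.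
    assert (I <= I - eps); [|lra]. apply HI2. intros z (x & Hx & ->).
    apply Rnot_lt_le. intro Hl. apply Hn. exists x. split; [exact Hx|exact Hl]. }
  exists I. split; [exact Hup|]. split; [exact Happ|].
  apply filterlim_locally. intro eps.
  destruct (Happ eps (cond_pos eps)) as (x & Hx & Hxe).
  apply (at_left_intro b x); [lra|]. intros y Hy.
  change (Rabs (Phi y - I) < eps).
  pose proof (Hmon x y ltac:(lra) ltac:(lra) ltac:(lra)). pose proof (Hup y ltac:(lra)).
  apply Rabs_def1; lra.
Qed.

Lemma cauchy_left {V : CompleteNormedModule R_AbsRing} (K : R -> V) (Phi : R -> R) a b I :
  a < b -> (forall x y, a <= x -> x <= y -> y < b -> norm (minus (K y) (K x)) <= Phi y - Phi x) ->
  (forall x, a <= x < b -> Phi x <= I) ->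
  (forall eps, 0 < eps -> exists x, a <= x < b /\ I - eps < Phi x) ->
  exists L, filterlim K (at_left b) (locally L).
Proof.
  intros Hab HK HI Happ.
  set (Fk := filtermap K (at_left b)).
  assert (PF : ProperFilter Fk) by (apply filtermap_proper_filter, at_left_proper_filter).
  assert (Hc : cauchy Fk).
  { intro eps. destruct (Happ eps (cond_pos eps)) as (x & Hx & Hxe).
    exists (K x). apply (at_left_intro b x); [lra|]. intros y Hy.
    apply: norm_compat1. pose proof (HK x y ltac:(lra) ltac:(lra) ltac:(lra)). pose proof (HI y ltac:(lra)).
    set N := norm (minus (K y) (K x)) in H *. lra. }
  exists (lim Fk). apply filterlim_locally. intro eps. exact (complete_cauchy Fk PF Hc eps).
Qed.

Lemma norm_lim_le {V : NormedModule R_AbsRing} (K : R -> V) (L : V) a b I :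
  a < b -> filterlim K (at_left b) (locally L) -> (forall x, a <= x < b -> norm (K x) <= I) ->
  norm L <= I.
Proof.
  intros Hab HL HI. apply Rnot_lt_le. intro Hlt.
  pose proof (@norm_factor_gt_0 R_AbsRing V) as Hnf.
  set (e := (norm L - I) / (2 * @norm_factor R_AbsRing V)).
  assert (He : 0 < e) by (unfold e; apply Rdiv_lt_0_compat; lra).
  move/filterlim_locally: HL => HL.
  destruct (at_left_pt b a _ Hab (HL (mkposreal e He))) as (u & Hu & Hb).
  pose proof (@norm_compat2 R_AbsRing V _ _ (mkposreal e He) Hb) as Hn. simpl in Hn.
  pose proof (norm_le_minus L (K u)) as H1. rewrite norm_minus_sym in H1.
  pose proof (HI u ltac:(lra)).
  assert (@norm_factor R_AbsRing V * e = (norm L - I) / 2) by (unfold e; field; lra).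
  set N := norm (minus (K u) L) in Hn H1. lra.
Qed.

Lemma lim_unique_left {V : NormedModule R_AbsRing} (f : R -> V) b x y :
  filterlim f (at_left b) (locally x) -> filterlim f (at_left b) (locally y) -> x = y.
Proof.
  intros H1 H2. exact (filterlim_locally_unique (F := at_left b) f x y H1 H2).
Qed.

Lemma wcont_mult_R (f g : R -> R) a b :
  a <= b -> wcont f a b -> wcont g a b -> wcont (fun s => f s * g s) a b.
Proof.
  intros Hab Hf Hg.
  destruct (wcont_norm_bounded f a b Hab Hf) as [Bf HBf].
  destruct (wcont_norm_bounded g a b Hab Hg) as [Bg HBg].
  intros s Hs eps He.
  set (Bf' := Rabs Bf + 1). set (Bg' := Rabs Bg + 1).
  assert (HBf' : 0 < Bf') by (unfold Bf'; pose proof (Rabs_pos Bf); lra).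
  assert (HBg' : 0 < Bg') by (unfold Bg'; pose proof (Rabs_pos Bg); lra).
  destruct (Hf s Hs (eps / (2 * Bg')) ltac:(apply Rdiv_lt_0_compat; lra)) as (d1 & Hd1 & H1).
  destruct (Hg s Hs (eps / (2 * Bf')) ltac:(apply Rdiv_lt_0_compat; lra)) as (d2 & Hd2 & H2).
  exists (Rmin d1 d2). split; [apply Rmin_pos; lra|]. intros s' Hs' Hss.
  pose proof (Rmin_l d1 d2). pose proof (Rmin_r d1 d2).
  specialize (H1 s' Hs' ltac:(lra)). specialize (H2 s' Hs' ltac:(lra)).
  change (Rabs (f s' - f s) < eps / (2 * Bg')) in H1.
  change (Rabs (g s' - g s) < eps / (2 * Bf')) in H2.
  change (Rabs (f s' * g s' - f s * g s) < eps).
  pose proof (HBf s' Hs') as Hfs. pose proof (HBg s Hs) as Hgs.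
  change (Rabs (f s') <= Bf) in Hfs. change (Rabs (g s) <= Bg) in Hgs.
  replace (f s' * g s' - f s * g s) with (f s' * (g s' - g s) + (f s' - f s) * g s) by ring.
  apply: Rle_lt_trans; [apply Rabs_triang|]. rewrite !Rabs_mult.
  assert (Rabs (f s') <= Bf') by (unfold Bf'; pose proof (Rle_abs Bf); lra).
  assert (Rabs (g s) <= Bg') by (unfold Bg'; pose proof (Rle_abs Bg); lra).
  assert (Ha : Rabs (f s') * Rabs (g s' - g s) <= eps / 2).
  { apply Rle_trans with (Bf' * (eps / (2 * Bf'))); [|right; field; lra].
    apply Rmult_le_compat; [apply Rabs_pos|apply Rabs_pos|lra|lra]. }
  assert (Hb : Rabs (f s' - f s) * Rabs (g s) < eps / 2).
  { apply Rle_lt_trans with (Rabs (f s' - f s) * Bg').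
    - apply Rmult_le_compat_l; [apply Rabs_pos|lra].
    - apply Rlt_le_trans with ((eps / (2 * Bg')) * Bg'); [|right; field; lra].
      apply Rmult_lt_compat_r; lra. }
  lra.
Qed.

Lemma wcont_reflect (f : R -> R) a b c :
  wcont f (c - b) (c - a) -> wcont (fun s => f (c - s)) a b.
Proof.
  intros Hf s Hs eps He. destruct (Hf (c - s) ltac:(lra) eps He) as (d & Hd & H).
  exists d. split; [exact Hd|]. intros s' Hs' Hss. apply H; [lra|].
  replace (c - s' - (c - s)) with (- (s' - s)) by ring. rewrite Rabs_Ropp. exact Hss.
Qed.

Lemma Rpower_gt0 x y : 0 < Rpower x y.
Proof. unfold Rpower. apply exp_pos. Qed.

Lemma rpow_int (t t0 tau sg C U : R) :
  0 < sg -> t0 <= tau -> tau < t ->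
  is_RInt (fun s => C * Rpower (t - s) (sg - 1) + U) t0 tau
    ((- C / sg * Rpower (t - tau) sg + U * tau) - (- C / sg * Rpower (t - t0) sg + U * t0)).
Proof.
  intros Hsg H1 H2.
  set (Kk := fun s => - C / sg * Rpower (t - s) sg + U * s).
  apply (is_RInt_derive Kk).
  - intros x Hx. rewrite Rmin_left in Hx; [|lra]. rewrite Rmax_right in Hx; [|lra].
    apply is_derive_Reals.
    assert (Hd : derivable_pt_lim Kk x (- C / sg * (sg * Rpower (t - x) (sg - 1) * (0 - 1)) + U * 1)).
    { apply (derivable_pt_lim_plus (mult_real_fct (- C / sg) (comp (fun y => Rpower y sg) (fct_cte t - id)%F))
          (mult_real_fct U id)).
      - apply derivable_pt_lim_scal. apply derivable_pt_lim_comp.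
        + apply derivable_pt_lim_minus; [apply derivable_pt_lim_const|apply derivable_pt_lim_id].
        + apply derivable_pt_lim_power. unfold fct_cte, id, minus_fct. lra.
      - apply derivable_pt_lim_scal, derivable_pt_lim_id. }
    replace (C * Rpower (t - x) (sg - 1) + U) with (- C / sg * (sg * Rpower (t - x) (sg - 1) * (0 - 1)) + U * 1)
      by (field; lra).
    exact Hd.
  - intros x Hx. rewrite Rmin_left in Hx; [|lra]. rewrite Rmax_right in Hx; [|lra].
    apply continuity_pt_filterlim.
    apply continuity_pt_plus; [|apply continuity_pt_const; intros a b; reflexivity].
    apply continuity_pt_scal.
    apply (derivable_continuous_pt (fun s => Rpower (t - s) (sg - 1))).
    exists ((sg - 1) * Rpower (t - x) (sg - 1 - 1) * (0 - 1)).
    apply (derivable_pt_lim_comp (fct_cte t - id)%F (fun y => Rpower y (sg - 1))).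
    + apply derivable_pt_lim_minus; [apply derivable_pt_lim_const|apply derivable_pt_lim_id].
    + apply derivable_pt_lim_power. unfold fct_cte, id, minus_fct. lra.
Qed.

Lemma ico_wcont {V : NormedModule R_AbsRing} (g : R -> V) a (T : Rbar) (t : R) :
  cont_on_Ico g a T -> Rbar_lt t T -> wcont g a t.
Proof.
  intros Hg HtT s Hs eps He.
  assert (HsT : Rbar_lt s T) by (apply (Rbar_le_lt_trans s t T); [change (s <= t); lra|exact HtT]).
  destruct (Hg s ltac:(lra) HsT eps He) as (d & Hd & Hb).
  exists d. split; [exact Hd|]. intros s' Hs' Hss. apply Hb; [lra| |exact Hss].
  apply (Rbar_le_lt_trans s' t T); [change (s' <= t); lra|exact HtT].
Qed.

Lemma ico_wderiv {V : NormedModule R_AbsRing} (g g' : R -> V) a (T : Rbar) (t : R) :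
  deriv_on_Ico g g' a T -> Rbar_lt t T -> wderiv g g' a t.
Proof.
  intros Hg HtT s Hs eps He.
  assert (HsT : Rbar_lt s T) by (apply (Rbar_le_lt_trans s t T); [change (s <= t); lra|exact HtT]).
  destruct (Hg s ltac:(lra) HsT eps He) as (d & Hd & Hb).
  exists d. split; [exact Hd|]. intros s' Hs' Hss. apply Hb; [lra| |exact Hss].
  apply (Rbar_le_lt_trans s' t T); [change (s' <= t); lra|exact HtT].
Qed.

Lemma addmap_wcont {U V : NormedModule R_AbsRing} (l : U -> V) (g : R -> U) a b M :
  (forall x y, l (minus x y) = minus (l x) (l y)) -> 0 < M -> (forall x, norm (l x) <= M * norm x) ->
  wcont g a b -> wcont (fun s => l (g s)) a b.
Proof.
  intros Hl HM Hb Hg s Hs eps He.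
  destruct (Hg s Hs (eps / M) ltac:(apply Rdiv_lt_0_compat; lra)) as (d & Hd & H).
  exists d. split; [exact Hd|]. intros s' Hs' Hss. rewrite -Hl.
  apply: Rle_lt_trans; [apply Hb|].
  replace eps with (M * (eps / M)) by (field; lra).
  apply Rmult_lt_compat_l; [exact HM|]. apply H; [exact Hs'|exact Hss].
Qed.

Lemma lin_wcont {U V : NormedModule R_AbsRing} (l : U -> V) (g : R -> U) a b :
  is_linear l -> wcont g a b -> wcont (fun s => l (g s)) a b.
Proof.
  intros Hl Hg. destruct (linear_norm _ Hl) as (M & HM & Hb).
  apply (addmap_wcont l g a b M); [|exact HM|exact Hb|exact Hg].
  intros x y. apply linear_minus, Hl.
Qed.

Lemma wcont_minus {V : NormedModule R_AbsRing} (f g : R -> V) a b :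
  wcont f a b -> wcont g a b -> wcont (fun s => minus (f s) (g s)) a b.
Proof.
  intros Hf Hg s Hs eps He.
  destruct (Hf s Hs (eps / 2) ltac:(lra)) as (d1 & Hd1 & H1).
  destruct (Hg s Hs (eps / 2) ltac:(lra)) as (d2 & Hd2 & H2).
  exists (Rmin d1 d2). split; [apply Rmin_pos; lra|]. intros s' Hs' Hss.
  pose proof (Rmin_l d1 d2). pose proof (Rmin_r d1 d2).
  rewrite g6.
  apply: Rle_lt_trans; [apply norm_minus_le|].
  pose proof (H1 s' Hs' ltac:(lra)). pose proof (H2 s' Hs' ltac:(lra)).
  set N1 := norm (minus (f s') (f s)) in H3 *.
  set N2 := norm (minus (g s') (g s)) in H4 *. lra.
Qed.

Section Main.
Variables (Fp F Fm : CompleteNormedModule R_AbsRing)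
  (ip : Fp -> F) (im : F -> Fm) (A : Fp -> Fm) (S : R -> Fm -> Fm) (SF : R -> F -> F)
  (SFm : R -> Fm -> F) (u um : R -> R) (D : F -> R -> Prop) (P : F -> R -> Fm).
Hypothesis (HP1p : dense_incl ip) (HP1m : dense_incl im).
Hypothesis (HAplus : forall x y, A (plus x y) = plus (A x) (A y))
  (HAscal : forall (k : R) x, A (scal k x) = scal k (A x))
  (HP2 : exists c1 c2, 0 < c1 /\ 0 < c2 /\ forall x : Fp,
      c1 * norm x <= norm (im (ip x)) + norm (A x) /\
      norm (im (ip x)) + norm (A x) <= c2 * norm x).
Hypothesis (HS : C0_semigroup S) (HgenA : generates S (fun y => im (ip y)) A).
Hypothesis (HSF : forall t f, 0 <= t -> im (SF t f) = S t (im f))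
  (Hupos : forall t, 0 <= t -> 0 < u t)
  (HSFbd : forall t f, 0 <= t -> norm (SF t f) <= u t * norm f).
Hypothesis (HSFm : forall t f, 0 < t -> im (SFm t f) = S t f)
  (HSFmcont : forall f t, 0 < t -> forall eps, 0 < eps -> exists d, 0 < d /\
      forall f' t', 0 < t' -> norm (minus f' f) < d -> Rabs (t' - t) < d ->
        norm (minus (SFm t' f') (SFm t f)) < eps)
  (Humpos : forall t, 0 < t -> 0 < um t)
  (Humcont : forall t, 0 < t -> continuous um t)
  (HSFmbd : forall t f, 0 < t -> norm (SFm t f) <= um t * norm f)
  (HumO : exists sigma, 0 < sigma <= 1 /\ exists C t1, 0 < t1 /\
      forall t, 0 < t < t1 -> um t <= C * Rpower t (sigma - 1)).
Hypothesis (HPlip : lipschitz_on_closed_bounded D P).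
Variables (f0 : Fp) (t0 : R) (T : Rbar) (phi : R -> Fp) (phidot : R -> Fm).
Hypothesis (Hphi_cont : cont_on_Ico phi t0 T)
  (Hphi_C1 : C1_on_Ico (fun t => im (ip (phi t))) phidot t0 T)
  (Hgraph : forall t, t0 <= t -> Rbar_lt t T -> D (ip (phi t)) t).
Variable (t : R).
Hypothesis (Ht0 : t0 <= t) (HtT : Rbar_lt t T).

Lemma ip_lin : is_linear ip.
Proof. destruct HP1p as [H _]. exact H. Qed.
Lemma im_lin : is_linear im.
Proof. destruct HP1m as [H _]. exact H. Qed.

Lemma A_minus x y : A (minus x y) = minus (A x) (A y).
Proof.
  rewrite /minus HAplus -(scal_opp_one y) HAscal scal_opp_one. reflexivity.
Qed.

Lemma A_bound : exists M, 0 < M /\ forall x, norm (A x) <= M * norm x.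
Proof.
  destruct HP2 as (c1 & c2 & _ & Hc2 & H). exists c2. split; [exact Hc2|].
  intro x. destruct (H x) as [_ H2]. pose proof (norm_ge_0 (im (ip x))). lra.
Qed.

Lemma phi_w : wcont phi t0 t.
Proof. exact (ico_wcont phi t0 T t Hphi_cont HtT). Qed.

Lemma ipphi_w : wcont (fun s => ip (phi s)) t0 t.
Proof. apply lin_wcont; [exact ip_lin|exact phi_w]. Qed.

Lemma X_w : wcont (fun s => im (ip (phi s))) t0 t.
Proof. apply (lin_wcont im (fun s => ip (phi s))); [exact im_lin|exact ipphi_w]. Qed.

Lemma phidot_w : wcont phidot t0 t.
Proof. destruct Hphi_C1 as (_ & _ & H). exact (ico_wcont phidot t0 T t H HtT). Qed.

Lemma Aphi_w : wcont (fun s => A (phi s)) t0 t.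
Proof.
  destruct A_bound as (M & HM & Hb).
  apply (addmap_wcont A phi t0 t M); [exact A_minus|exact HM|exact Hb|exact phi_w].
Qed.

Lemma X_wderiv : wderiv (fun s => im (ip (phi s))) phidot t0 t.
Proof. destruct Hphi_C1 as (_ & H & _). exact (ico_wderiv _ _ t0 T t H HtT). Qed.

Definition graphC : F * R -> Prop := fun p => exists s, t0 <= s <= t /\ p = (ip (phi s), s).

Lemma graphC_closed : closed graphC.
Proof.
  intros [f tau] Hp. apply NNPP. intro HnC. apply Hp. clear Hp.
  destruct (Rlt_dec tau t0) as [Hl|Hl].
  { exists (mkposreal (t0 - tau) ltac:(lra)). intros [f' tau'] [_ Hb].
    change (Rabs (tau' - tau) < t0 - tau) in Hb. intros (s & Hs & E). injection E as E1 E2.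
    subst tau'. apply Rabs_def2 in Hb. lra. }
  destruct (Rlt_dec t tau) as [Hr|Hr].
  { exists (mkposreal (tau - t) ltac:(lra)). intros [f' tau'] [_ Hb].
    change (Rabs (tau' - tau) < tau - t) in Hb. intros (s & Hs & E). injection E as E1 E2.
    subst tau'. apply Rabs_def2 in Hb. lra. }
  assert (Htau : t0 <= tau <= t) by lra.
  set (g := ip (phi tau)).
  assert (Hne : 0 < norm (minus f g)).
  { destruct (Rle_lt_or_eq_dec 0 (norm (minus f g)) (norm_ge_0 _)) as [H|H]; [exact H|].
    exfalso. apply HnC. exists tau. split; [exact Htau|]. symmetry in H. move/minus_zero_eq: H => H.
    rewrite H. reflexivity. }
  set (d0 := norm (minus f g)).
  destruct (ipphi_w tau Htau (d0 / 2) ltac:(unfold d0; lra)) as (eta & Heta & Hw).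
  pose proof (@norm_factor_gt_0 R_AbsRing F) as Hnf.
  set (eps := Rmin eta (d0 / (2 * @norm_factor R_AbsRing F))).
  assert (Heps : 0 < eps) by (unfold eps; apply Rmin_pos; [lra|apply Rdiv_lt_0_compat; unfold d0; lra]).
  exists (mkposreal eps Heps). intros [f' tau'] [Hb1 Hb2].
  simpl in Hb1. change (Rabs (tau' - tau) < eps) in Hb2.
  pose proof (@norm_compat2 R_AbsRing F f f' (mkposreal eps Heps) Hb1) as Hn. simpl in Hn.
  intros (s & Hs & E). injection E as E1 E2. subst tau' f'.
  pose proof (Rmin_l eta (d0 / (2 * @norm_factor R_AbsRing F))) as Hm1.
  pose proof (Rmin_r eta (d0 / (2 * @norm_factor R_AbsRing F))) as Hm2.
  assert (Hm1' : eps <= eta) by exact Hm1.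
  assert (Hm2' : eps <= d0 / (2 * @norm_factor R_AbsRing F)) by exact Hm2. clear Hm1 Hm2.
  rename Hm1' into Hm1. rename Hm2' into Hm2.
  pose proof (Hw s Hs ltac:(lra)) as H1.
  assert (Hn2 : @norm_factor R_AbsRing F * eps <= d0 / 2).
  { apply Rmult_le_compat_l with (r := @norm_factor R_AbsRing F) in Hm2; [|lra].
    replace (@norm_factor R_AbsRing F * (d0 / (2 * @norm_factor R_AbsRing F))) with (d0 / 2) in Hm2 by (field; lra).
    exact Hm2. }
  pose proof (norm_tri3 f (ip (phi s)) g) as H3. fold d0 in H3.
  rewrite norm_minus_sym in Hn.
  set N1 := norm (minus f (ip (phi s))) in Hn H3.
  set N2 := norm (minus (ip (phi s)) g) in H1 H3.
  assert (d0 <= N1 + N2) by exact H3.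
  lra.
Qed.

Lemma graphC_bounded : bounded_FR graphC.
Proof.
  destruct (wcont_norm_bounded _ t0 t Ht0 ipphi_w) as [Mb HMb].
  exists (Rmax Mb (Rmax (Rabs t0) (Rabs t))). intros p (s & Hs & E). subst p. simpl. split.
  - apply: Rle_trans; [apply HMb, Hs|apply Rmax_l].
  - apply: Rle_trans; [|apply Rmax_r]. apply Rabs_le. split.
    + pose proof (Rmax_l (Rabs t0) (Rabs t)). pose proof (Rabs_maj2 t0). lra.
    + pose proof (Rmax_r (Rabs t0) (Rabs t)). pose proof (Rle_abs t). lra.
Qed.

Lemma Pphi_w : wcont (fun s => P (ip (phi s)) s) t0 t.
Proof.
  destruct (HPlip graphC graphC_closed graphC_bounded) as (L & M & HL & HM & Hlip).
  { intros p (s & Hs & E). subst p. simpl. apply Hgraph; [lra|].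
    apply (Rbar_le_lt_trans s t T); [change (s <= t); lra|exact HtT]. }
  intros s Hs eps He.
  destruct (ipphi_w s Hs (eps / (2 * (L + 1))) ltac:(apply Rdiv_lt_0_compat; lra)) as (d & Hd & Hw).
  exists (Rmin d (eps / (2 * (M + 1)))). split.
  { apply Rmin_pos; [lra|]. apply Rdiv_lt_0_compat; lra. }
  intros s' Hs' Hss. pose proof (Rmin_l d (eps / (2 * (M + 1)))). pose proof (Rmin_r d (eps / (2 * (M + 1)))).
  pose proof (Hlip (ip (phi s'), s') (ip (phi s), s) ltac:(exists s'; split; [exact Hs'|reflexivity])
     ltac:(exists s; split; [exact Hs|reflexivity])) as Hli. simpl in Hli.
  apply: Rle_lt_trans; [exact Hli|].
  pose proof (Hw s' Hs' ltac:(lra)) as H1.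
  assert (HL1 : L * norm (minus (ip (phi s')) (ip (phi s))) <= L * (eps / (2 * (L + 1)))) by (apply Rmult_le_compat_l; [lra|apply Rlt_le; exact H1]).
  assert (L * (eps / (2 * (L + 1))) <= eps / 2).
  { apply (Rmult_le_reg_r (2 * (L + 1))); [lra|]. field_simplify; [|lra]. nra. }
  assert (M * Rabs (s' - s) <= M * (eps / (2 * (M + 1)))) by (apply Rmult_le_compat_l; lra).
  assert (M * (eps / (2 * (M + 1))) < eps / 2).
  { apply (Rmult_lt_reg_r (2 * (M + 1))); [lra|]. field_simplify; [|lra]. nra. }
  set N := norm (minus (ip (phi s')) (ip (phi s))) in HL1 *.
  lra.
Qed.


Lemma Sbd : exists M, 0 < M /\ forall r y, 0 <= r <= t - t0 -> norm (S r y) <= M * norm y.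
Proof. exact (S_bound im S SFm um im_lin HS HSFm Humcont HSFmbd (t - t0)). Qed.

Lemma Sstr : forall y r, 0 <= r -> forall eps, 0 < eps -> exists d, 0 < d /\
  forall r', 0 <= r' -> Rabs (r' - r) < d -> norm (minus (S r' y) (S r y)) < eps.
Proof. exact (S_strong im S SFm um im_lin HS HSFm Humcont HSFmbd). Qed.

Lemma Swc (Y : R -> Fm) : wcont Y t0 t -> wcont (fun s => S (t - s) (Y s)) t0 t.
Proof.
  destruct Sbd as (M & HM & HMb).
  exact (S_wcont S t0 t M (S_lin S HS) HM HMb Sstr Y).
Qed.

Definition ee (s : R) : Fm := minus (minus (phidot s) (A (phi s))) (P (ip (phi s)) s).

Lemma ee_w : wcont ee t0 t.
Proof.
  apply (wcont_minus (fun s => minus (phidot s) (A (phi s))) (fun s => P (ip (phi s)) s)).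
  - apply (wcont_minus phidot (fun s => A (phi s))); [exact phidot_w|exact Aphi_w].
  - exact Pphi_w.
Qed.

Lemma FTC_main : is_RInt (fun s => S (t - s) (minus (phidot s) (A (phi s)))) t0 t
   (minus (im (ip (phi t))) (S (t - t0) (im (ip (phi t0))))).
Proof.
  destruct Sbd as (M & HM & HMb).
  have H := ftc_w (fun s => S (t - s) (im (ip (phi s))))
     (fun s => S (t - s) (minus (phidot s) (A (phi s)))) t0 t Ht0.
  have HG := G_wderiv S (fun s => im (ip (phi s))) phidot (fun s => A (phi s)) t0 t M (S_lin S HS)
     (S_add S HS) HM HMb Sstr.
  rewrite Rminus_diag (S_zero S HS) in H. apply H.
  - apply HG; [|exact X_wderiv]. intros s Hs. destruct HgenA as [Hg _]. apply Hg.
  - apply (Swc (fun s => minus (phidot s) (A (phi s)))).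
    apply (wcont_minus phidot (fun s => A (phi s))); [exact phidot_w|exact Aphi_w].
Qed.

Lemma part_i :
  minus (minus (im (ip (phi t))) (S (t - t0) (im (ip f0))))
        (RInt (fun s => S (t - s) (P (ip (phi s)) s)) t0 t)
  = plus (S (t - t0) (im (ip (minus (phi t0) f0)))) (RInt (fun s => S (t - s) (ee s)) t0 t).
Proof.
  have HI2 := RInt_correct _ _ _ (ex_RInt_wcont _ t0 t Ht0 (Swc _ Pphi_w)).
  set I2 := RInt (fun s => S (t - s) (P (ip (phi s)) s)) t0 t in HI2 *.
  have HIe := is_RInt_minus _ _ _ _ _ _ FTC_main HI2.
  have HIe' : is_RInt (fun s => S (t - s) (ee s)) t0 t
      (minus (minus (im (ip (phi t))) (S (t - t0) (im (ip (phi t0))))) I2).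
  { apply: (is_RInt_ext _ _ _ _ _ _ HIe). intros s Hs.
    rewrite Rmin_left in Hs; [|exact Ht0]. rewrite Rmax_right in Hs; [|exact Ht0].
    rewrite /ee (linear_minus (S (t - s)) (minus (phidot s) (A (phi s))) (P (ip (phi s)) s) (S_lin S HS (t - s) ltac:(lra))). reflexivity. }
  rewrite (is_RInt_unique _ _ _ _ HIe').
  rewrite (linear_minus _ _ _ ip_lin) (linear_minus _ _ _ im_lin).
  rewrite (linear_minus _ _ _ (S_lin S HS (t - t0) ltac:(lra))).
  rewrite g5. reflexivity.
Qed.


Lemma SF0_id x : SF 0 x = x.
Proof.
  destruct HP1m as (_ & Hinj & _). apply Hinj. rewrite HSF; [|lra]. apply (S_zero S HS).
Qed.

Lemma SFmK_w (tau : R) : t0 <= tau < t -> wcont (fun s => SFm (t - s) (ee s)) t0 tau.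
Proof.
  intros Htau s Hs eps He.
  destruct (HSFmcont (ee s) (t - s) ltac:(lra) eps He) as (d & Hd & H).
  destruct (ee_w s ltac:(lra) d Hd) as (d' & Hd' & H').
  exists (Rmin d d'). split; [apply Rmin_pos; lra|]. intros s' Hs' Hss.
  pose proof (Rmin_l d d'). pose proof (Rmin_r d d').
  apply H; [lra| apply H'; [lra|lra]|].
  replace (t - s' - (t - s)) with (- (s' - s)) by ring. rewrite Rabs_Ropp. lra.
Qed.

Lemma um_w (tau : R) : t0 <= tau < t -> wcont (fun s => um (t - s)) t0 tau.
Proof.
  intros Htau. apply wcont_reflect. apply cont_wcont_R. intros s Hs. apply Humcont. lra.
Qed.

Lemma lt_T (s : R) : s <= t -> Rbar_lt s T.
Proof. intro H. apply (Rbar_le_lt_trans s t T); [change (s <= t); lra|exact HtT]. Qed.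

Lemma minus_plus_self {V : NormedModule R_AbsRing} (a b : V) : minus a (plus a b) = opp b.
Proof. rewrite /minus opp_plus plus_assoc plus_opp_r plus_zero_l. reflexivity. Qed.

Lemma part_ii (delta : R) (epsf : R -> R) :
  0 <= delta -> norm (ip (minus (phi t0) f0)) <= delta ->
  (forall s, t0 <= s -> Rbar_lt s T -> 0 <= epsf s) ->
  cont_on_Ico epsf t0 T ->
  (forall s, t0 <= s -> Rbar_lt s T -> norm (ee s) <= epsf s) ->
  exists (g : F) (I : R),
    im g = minus (minus (im (ip (phi t))) (S (t - t0) (im (ip f0))))
             (RInt (fun s => S (t - s) (P (ip (phi s)) s)) t0 t) /\
    improper_int_Ico (fun s => um (t - s) * epsf s) t0 t I /\
    norm g <= u (t - t0) * delta + I.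
Proof.
  intros Hdel Hd Hepos Hecont Hebd.
  rewrite part_i.
  set (d := minus (phi t0) f0) in *.
  destruct (Req_dec t0 t) as [Et|Hne].
  { exists (ip d), 0. rewrite -Et Rminus_diag (S_zero S HS) RInt_point plus_zero_r.
    split; [reflexivity|]. split.
    { split; [lra|]. split; [intros tau Htau; lra|]. split; [intros _; reflexivity|intros; lra]. }
    pose proof (HSFbd 0 (ip d) ltac:(lra)) as H. rewrite SF0_id in H.
    pose proof (Hupos 0 ltac:(lra)) as Hu0. pose proof (norm_ge_0 (ip d)).
    set N := norm (ip d) in H Hd *.
    destruct (Rle_dec 1 (u 0)) as [H1|H1].
    - assert (delta <= u 0 * delta) by nra. lra.
    - assert (N <= 0) by nra. assert (0 <= u 0 * delta) by nra. lra. }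
  assert (Hlt : t0 < t) by lra.
  set (h := fun s => um (t - s) * epsf s).
  assert (Hh_w : forall tau, t0 <= tau < t -> wcont h t0 tau).
  { intros tau Htau. apply wcont_mult_R; [lra|apply um_w, Htau|].
    apply (ico_wcont epsf t0 T tau Hecont). apply lt_T. lra. }
  assert (Hh_ex : forall x y, t0 <= x -> x <= y -> y < t -> ex_RInt h x y).
  { intros x y H1 H2 H3. apply (@ex_RInt_wcont R_CompleteNormedModule h x y); [exact H2|].
    apply (wcont_sub h t0 y); [lra|lra|]. apply Hh_w. lra. }
  assert (Hh_pos : forall s, t0 <= s < t -> 0 <= h s).
  { intros s Hs. unfold h. apply Rmult_le_pos; [apply Rlt_le, Humpos; lra|apply Hepos; [lra|apply lt_T; lra]]. }
  set (Phi := fun tau => RInt h t0 tau).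
  assert (HChh : forall x y, t0 <= x -> x <= y -> y < t -> Phi y = Phi x + RInt h x y).
  { intros x y H1 H2 H3. unfold Phi. symmetry.
    exact (RInt_Chasles h t0 x y (Hh_ex t0 x ltac:(lra) H1 ltac:(lra)) (Hh_ex x y H1 H2 H3)). }
  assert (Hmon : forall x y, t0 <= x -> x <= y -> y < t -> Phi x <= Phi y).
  { intros x y H1 H2 H3. rewrite (HChh x y H1 H2 H3).
    assert (0 <= RInt h x y); [|lra]. apply RInt_ge_0; [exact H2|apply Hh_ex; lra|].
    intros z Hz. apply Hh_pos. lra. }
  assert (HB : exists B, forall tau, t0 <= tau < t -> Phi tau <= B).
  { destruct HumO as (sg & Hsg & C & t1 & Ht1 & Hum).
    set (a1 := Rmin t1 (t - t0)).
    assert (Ha1 : 0 < a1) by (unfold a1; apply Rmin_pos; lra).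
    assert (Ha1' : a1 <= t - t0) by apply Rmin_r.
    destruct (wcont_real_bounded um a1 (t - t0) Ha1') as [U0 HU0].
    { apply cont_wcont_R. intros s Hs. apply Humcont. lra. }
    destruct (wcont_real_bounded epsf t0 t Ht0 (ico_wcont epsf t0 T t Hecont HtT)) as [E0 HE0].
    set (C' := Rabs E0 * Rabs C). set (U' := Rabs E0 * Rabs U0).
    assert (HumB : forall r, 0 < r <= t - t0 -> um r <= Rabs C * Rpower r (sg - 1) + Rabs U0).
    { intros r Hr. pose proof (Rpower_gt0 r (sg - 1)). pose proof (Rabs_pos C). pose proof (Rabs_pos U0).
      destruct (Rlt_dec r t1) as [Hr1|Hr1].
      - pose proof (Hum r ltac:(lra)). pose proof (Rle_abs C).
        assert (C * Rpower r (sg - 1) <= Rabs C * Rpower r (sg - 1)) by (apply Rmult_le_compat_r; lra). lra.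
      - assert (a1 <= r) by (unfold a1; pose proof (Rmin_l t1 (t - t0)); lra).
        pose proof (HU0 r ltac:(lra)). pose proof (Rle_abs U0). nra. }
    exists (C' / sg * Rpower (t - t0) sg + U' * (t - t0)).
    intros tau Htau.
    pose proof (rpow_int t t0 tau sg C' U' ltac:(lra) ltac:(lra) ltac:(lra)) as Hk.
    unfold Phi. apply Rle_trans with (RInt (fun s => C' * Rpower (t - s) (sg - 1) + U') t0 tau).
    - apply RInt_le; [lra|apply Hh_ex; lra|eexists; exact Hk|].
      intros x Hx. unfold h, C', U'.
      pose proof (HumB (t - x) ltac:(lra)) as H1. pose proof (HE0 x ltac:(lra)) as H2.
      pose proof (Hepos x ltac:(lra) (lt_T x ltac:(lra))) as H3. pose proof (Humpos (t - x) ltac:(lra)).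
      pose proof (Rle_abs E0). pose proof (Rabs_pos C). pose proof (Rabs_pos U0).
      pose proof (Rpower_gt0 (t - x) (sg - 1)).
      assert (um (t - x) * epsf x <= (Rabs C * Rpower (t - x) (sg - 1) + Rabs U0) * Rabs E0).
      { apply Rmult_le_compat; lra. }
      nra.
    - rewrite (is_RInt_unique _ _ _ _ Hk).
      pose proof (Rpower_gt0 (t - tau) sg). pose proof (Rabs_pos E0). pose proof (Rabs_pos C).
      pose proof (Rabs_pos U0).
      assert (0 <= C' / sg * Rpower (t - tau) sg).
      { unfold C'. apply Rmult_le_pos; [apply Rdiv_le_0_compat; [apply Rmult_le_pos; lra|lra]|lra]. }
      assert (0 <= U') by (unfold U'; apply Rmult_le_pos; lra).
      assert (- C' / sg * Rpower (t - tau) sg = - (C' / sg * Rpower (t - tau) sg)) by (field; lra).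
      assert (- C' / sg * Rpower (t - t0) sg = - (C' / sg * Rpower (t - t0) sg)) by (field; lra).
      nra. }
  destruct HB as [B HB].
  destruct (mono_lim Phi t0 t B Hlt Hmon HB) as (I & HIup & HIapp & HIlim).
  set (Kf := fun tau => RInt (fun s => SFm (t - s) (ee s)) t0 tau).
  assert (HKex : forall x y, t0 <= x -> x <= y -> y < t -> ex_RInt (fun s => SFm (t - s) (ee s)) x y).
  { intros x y H1 H2 H3. apply ex_RInt_wcont; [exact H2|].
    apply (wcont_sub _ t0 y); [lra|lra|]. apply SFmK_w. lra. }
  assert (HKb : forall x y, t0 <= x -> x <= y -> y < t ->
            norm (RInt (fun s => SFm (t - s) (ee s)) x y) <= RInt h x y).
  { intros x y H1 H2 H3.
    apply (norm_RInt_le (fun s => SFm (t - s) (ee s)) h x y); [exact H2| |apply RInt_correct, HKex; lra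
          |exact (@RInt_correct R_CompleteNormedModule h x y (Hh_ex x y H1 H2 H3))].
    intros z Hz. unfold h. apply: Rle_trans; [apply HSFmbd; lra|].
    apply Rmult_le_compat_l; [apply Rlt_le, Humpos; lra|]. apply Hebd; [lra|apply lt_T; lra]. }
  assert (HK : forall x y, t0 <= x -> x <= y -> y < t -> norm (minus (Kf y) (Kf x)) <= Phi y - Phi x).
  { intros x y H1 H2 H3. rewrite (HChh x y H1 H2 H3).
    unfold Kf. rewrite -(RInt_Chasles _ t0 x y (HKex t0 x ltac:(lra) H1 ltac:(lra)) (HKex x y H1 H2 H3)).
    rewrite plus_minus_cancel. pose proof (HKb x y H1 H2 H3). lra. }
  destruct (cauchy_left Kf Phi t0 t I Hlt HK HIup HIapp) as [Lg HLg].
  assert (HKn : forall x, t0 <= x < t -> norm (Kf x) <= I).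
  { intros x Hx. pose proof (HKb t0 x ltac:(lra) ltac:(lra) ltac:(lra)). pose proof (HIup x Hx).
    unfold Kf. unfold Phi in H0. set N := norm (RInt (fun s : R => SFm (t - s) (ee s)) t0 x) in H *. lra. }
  pose proof (norm_lim_le Kf Lg t0 t I Hlt HLg HKn) as HnLg.
  set (J := RInt (fun s => S (t - s) (ee s)) t0 t).
  assert (HimK : forall x, t0 <= x < t -> im (Kf x) = RInt (fun s => S (t - s) (ee s)) t0 x).
  { intros x Hx. unfold Kf. symmetry. apply is_RInt_unique.
    apply (is_RInt_ext (fun s => im (SFm (t - s) (ee s)))).
    { intros z Hz. rewrite Rmin_left in Hz; [|lra]. rewrite Rmax_right in Hz; [|lra].
      apply HSFm. lra. }
    apply is_RInt_lin; [exact im_lin|]. apply RInt_correct, HKex; lra. }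
  assert (HexJ : ex_RInt (fun s => S (t - s) (ee s)) t0 t) by (apply ex_RInt_wcont; [exact Ht0|apply Swc, ee_w]).
  destruct (wcont_norm_bounded _ t0 t Ht0 (Swc ee ee_w)) as [Bn HBn].
  assert (HJlim : filterlim (fun x => RInt (fun s => S (t - s) (ee s)) t0 x) (at_left t) (locally J)).
  { apply filterlim_locally. intro eps.
    set (Bn' := Rabs Bn + 1).
    assert (HBn' : 0 < Bn') by (unfold Bn'; pose proof (Rabs_pos Bn); lra).
    apply (at_left_intro t (Rmax t0 (t - eps / Bn'))).
    { apply Rmax_lub_lt; [lra|]. assert (0 < eps / Bn') by (apply Rdiv_lt_0_compat; [apply cond_pos|lra]). lra. }
    intros x Hx. pose proof (Rmax_l t0 (t - eps / Bn')). pose proof (Rmax_r t0 (t - eps / Bn')).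
    have HexA : ex_RInt (fun s => S (t - s) (ee s)) t0 x.
    { apply ex_RInt_wcont; [lra|]. apply (wcont_sub _ t0 t); [lra|lra|]. apply Swc, ee_w. }
    have HexB : ex_RInt (fun s => S (t - s) (ee s)) x t.
    { apply ex_RInt_wcont; [lra|]. apply (wcont_sub _ t0 t); [lra|lra|]. apply Swc, ee_w. }
    apply: norm_compat1. unfold J. rewrite -(RInt_Chasles _ t0 x t HexA HexB) minus_plus_self norm_opp.
    apply Rle_lt_trans with ((t - x) * Bn').
    - apply (norm_RInt_le_const (fun s => S (t - s) (ee s)) x t); [lra| |apply RInt_correct, HexB].
      intros z Hz. pose proof (HBn z ltac:(lra)). unfold Bn'. pose proof (Rle_abs Bn). lra.
    - assert (t - x < eps / Bn') by lra.
      apply Rmult_lt_reg_r with (/ Bn'). { apply Rinv_0_lt_compat; lra. }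
      rewrite Rmult_assoc Rinv_r; [|lra]. rewrite Rmult_1_r. lra. }
  assert (HimLg : im Lg = J).
  { apply (lim_unique_left (fun x => im (Kf x)) t).
    - eapply filterlim_comp; [exact HLg|]. exact (@linear_cont R_AbsRing F Fm im Lg im_lin).
    - apply (filterlim_ext_loc (fun x => RInt (fun s => S (t - s) (ee s)) t0 x)); [|exact HJlim].
      apply (at_left_intro t t0 _ Hlt). intros x Hx. symmetry. apply HimK. lra. }
  exists (plus (SF (t - t0) (ip d)) Lg), I.
  split.
  { rewrite (linear_plus _ im_lin) HSF; [|lra]. rewrite HimLg. reflexivity. }
  split.
  { split; [lra|]. split; [intros tau Htau; apply Hh_ex; lra|]. split; [intros; lra|].
    intros _. exact HIlim. }
  apply: Rle_trans; [apply: norm_triangle|].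
  pose proof (HSFbd (t - t0) (ip d) ltac:(lra)). pose proof (Hupos (t - t0) ltac:(lra)).
  assert (u (t - t0) * norm (ip d) <= u (t - t0) * delta) by (apply Rmult_le_compat_l; lra).
  set N1 := norm (SF (t - t0) (ip d)) in H *.
  set N2 := norm Lg in HnLg *.
  lra.
Qed.

End Main.

Theorem lemma3p4
  (Fp F Fm : CompleteNormedModule R_AbsRing)
  (ip : Fp -> F) (im : F -> Fm)            (* F_+ ↪ F ↪ F_- *)
  (A : Fp -> Fm)
  (S : R -> Fm -> Fm)                      (* e^{tA} on F_- *)
  (SF : R -> F -> F)                       (* e^{tA} restricted to F *)
  (SFm : R -> Fm -> F)                     (* e^{tA} : F_- -> F, t > 0 *)
  (u um : R -> R)                          (* u, u_- *)
  (D : F -> R -> Prop) (P : F -> R -> Fm)  (* Dom P, P *)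
  (* (P1) *)
  (HP1p : dense_incl ip) (HP1m : dense_incl im)
  (* (P2) *)
  (HAplus : forall x y, A (plus x y) = plus (A x) (A y))
  (HAscal : forall (k : R) x, A (scal k x) = scal k (A x))
  (HP2 : exists c1 c2, 0 < c1 /\ 0 < c2 /\ forall x : Fp,
      c1 * norm x <= norm (im (ip x)) + norm (A x) /\
      norm (im (ip x)) + norm (A x) <= c2 * norm x)
  (* (P3) *)
  (HS : C0_semigroup S)
  (HgenA : generates S (fun y => im (ip y)) A)
  (* (P4) *)
  (HSF : forall t f, 0 <= t -> im (SF t f) = S t (im f))
  (HSFcont : forall f t, 0 <= t -> forall eps, 0 < eps -> exists d, 0 < d /\
      forall f' t', 0 <= t' -> norm (minus f' f) < d -> Rabs (t' - t) < d ->
        norm (minus (SF t' f') (SF t f)) < eps)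
  (Hupos : forall t, 0 <= t -> 0 < u t)
  (Hucont : forall t, 0 <= t -> forall eps, 0 < eps -> exists d, 0 < d /\
      forall s, 0 <= s -> Rabs (s - t) < d -> Rabs (u s - u t) < eps)
  (HSFbd : forall t f, 0 <= t -> norm (SF t f) <= u t * norm f)
  (* (P5) *)
  (HSFm : forall t f, 0 < t -> im (SFm t f) = S t f)
  (HSFmcont : forall f t, 0 < t -> forall eps, 0 < eps -> exists d, 0 < d /\
      forall f' t', 0 < t' -> norm (minus f' f) < d -> Rabs (t' - t) < d ->
        norm (minus (SFm t' f') (SFm t f)) < eps)
  (Humpos : forall t, 0 < t -> 0 < um t)
  (Humcont : forall t, 0 < t -> continuous um t)
  (HSFmbd : forall t f, 0 < t -> norm (SFm t f) <= um t * norm f)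
  (HumO : exists sigma, 0 < sigma <= 1 /\ exists C t1, 0 < t1 /\
      forall t, 0 < t < t1 -> um t <= C * Rpower t (sigma - 1))
  (* (P6) *)
  (HDopen : semi_open D)
  (HPlip : lipschitz_on_closed_bounded D P)
  (* data of the lemma *)
  (f0 : Fp) (t0 : R) (T : Rbar)
  (phi : R -> Fp) (phidot : R -> Fm)
  (Hf0 : D (ip f0) t0)
  (HT : Rbar_lt t0 T)
  (Hphi_cont : cont_on_Ico phi t0 T)
  (Hphi_C1 : C1_on_Ico (fun t => im (ip (phi t))) phidot t0 T)
  (Hgraph : forall t, t0 <= t -> Rbar_lt t T -> D (ip (phi t)) t) :
  let d := minus (phi t0) f0 in
  let e := fun t => minus (minus (phidot t) (A (phi t))) (P (ip (phi t)) t) in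
  let E := fun t => minus (minus (im (ip (phi t))) (S (t - t0) (im (ip f0))))
                          (RInt (fun s => S (t - s) (P (ip (phi s)) s)) t0 t) in
  (* (i) *)
  (cont_on_Ico (fun t => ip (phi t)) t0 T /\
   forall t, t0 <= t -> Rbar_lt t T ->
     E t = plus (S (t - t0) (im (ip d))) (RInt (fun s => S (t - s) (e s)) t0 t)) /\
  (* (ii) *)
  (forall (delta : R) (eps : R -> R),
     0 <= delta -> norm (ip d) <= delta ->
     (forall t, t0 <= t -> Rbar_lt t T -> 0 <= eps t) ->
     cont_on_Ico eps t0 T ->
     (forall t, t0 <= t -> Rbar_lt t T -> norm (e t) <= eps t) ->
     forall t, t0 <= t -> Rbar_lt t T ->
       exists (g : F) (I : R),
         im g = E t /\
         improper_int_Ico (fun s => um (t - s) * eps s) t0 t I /\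
         norm g <= u (t - t0) * delta + I).
Proof.
  intros d e E. split.
  - split.
    + intros s Hs HsT eps He. destruct (linear_norm _ (ip_lin Fp F ip HP1p)) as (M & HM & HMb).
      destruct (Hphi_cont s Hs HsT (eps / M) ltac:(apply Rdiv_lt_0_compat; lra)) as (dd & Hdd & H).
      exists dd. split; [exact Hdd|]. intros s' Hs' Hs'T Hss.
      rewrite -(linear_minus _ _ _ (ip_lin Fp F ip HP1p)).
      apply: Rle_lt_trans; [apply HMb|].
      replace eps with (M * (eps / M)) by (field; lra).
      apply Rmult_lt_compat_l; [exact HM|]. apply H; assumption.
    + intros t Ht HtT.
      exact (part_i Fp F Fm ip im A S SFm um D P HP1p HP1m HAplus HAscal HP2 HS HgenA HSFm Humcont HSFmbd
               HPlip f0 t0 T phi phidot Hphi_cont Hphi_C1 Hgraph t Ht HtT).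
  - intros delta eps Hdel Hd Hepos Hecont Hebd t Ht HtT.
    exact (part_ii Fp F Fm ip im A S SF SFm u um D P HP1p HP1m HAplus HAscal HP2 HS HgenA HSF Hupos HSFbd
             HSFm HSFmcont Humpos Humcont HSFmbd HumO HPlip f0 t0 T phi phidot Hphi_cont Hphi_C1 Hgraph
             t Ht HtT delta eps Hdel Hd Hepos Hecont Hebd).
Qed.
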